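(* Let $\mathcal{R}$ be a TRS (left-hand sides possibly non-linear), $(S,s_0,L,\delta,\mathit{out}_L,\mathit{out}_{NL})$ the non-linear set automaton for $\mathcal{R}$, $t_0$ a ground term and $\mathit{select}$ a strategy. If $\textsc{NormalizeNonLinear}(t_0,\mathit{select})$ returns a term $t$, then $t$ is a normal form of $t_0$, i.e. $t_0\to^*t$ and $t$ has no redexes.
   Context: Terms: $\mathbb{F}$ finite ranked alphabet with arity $\#$, $\mathbb{V}$ variables. Positions are finite lists of positive integers; $\epsilon$ empty, $p.q$ concatenation, $p\le q$ means $p$ is a prefix of $q$. $\mathcal{D}(t)$ positions of $t$, $\mathcal{E}(t)$ variable positions, $t|_p$ subterm, $t[u]_p$ replacement, $\mathrm{hd}(t)$ head symbol. A TRS $\mathcal{R}$ is a finite nonempty set of rules $\ell\to r$ ($\ell\notin\mathbb{V}$, $\mathrm{vars}(r)\subseteq\mathrm{vars}(\ell)$) with left-hand sides $\mathcal{L}$. A redex of $t$ is $(\ell\to r)@p$ with $\ell\to r\in\mathcal{R}$ and $t|_p=\ell^\sigma$; $t[(\ell\to r)@p]=t[r^\sigma]_p$; $\to^*$ is the reflexive-transitive closure of one-step rewriting; a normal form has no redexes. $\pi(\ell)$ is the partition of $\mathcal{E}(\ell)$ into sets of positions holding the same variable; $\ell$ is linear iff $|\pi(\ell)|=|\mathcal{E}(\ell)|$. A term $u$ is consistent with $\pi(\ell)$ iff $u|_p=u|_q$ for all $P\in\pi(\ell)$, $p,q\in P$. Set automaton construction. $\mathrm{sub}(\mathcal{L})$: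 subterms $\ell|_q$, $\ell\in\mathcal{L}$, $q\in\mathcal{D}(\ell)\setminus\mathcal{E}(\ell)$. A match goal $\ell_1@p_1,\dots,\ell_n@p_n\hookrightarrow\ell@p$ ($n\ge1$) has nonempty obligation $mo=\{\ell_i@p_i\}$ ($\ell_i\in\mathrm{sub}(\mathcal{L})$) and announcement $\ell@p$ ($\ell\in\mathcal{L}$); $\mathrm{pos}(mo)=\{p_i\}$. States are nonempty sets of goals; $s_0=\{\ell@\epsilon\hookrightarrow\ell@\epsilon\mid\ell\in\mathcal{L}\}$; $S$ = states reachable from $s_0$. Each state $s$ has a fixed label $L(s)\in\mathrm{pos}(mo)$ for some goal $mo\hookrightarrow\ell@\epsilon\in s$. $\mathrm{reduce}(mo,f,p)=\{\ell'@q\in mo\mid q\ne p\}\cup\{\ell'|_i@p.i\mid\ell'@p\in mo,1\le i\le\#f,\ell'|_i\notin\mathbb{V}\}$. $\mathrm{deriv}(s,f)$ is the union of $\{\mathrm{reduce}(mo,f,L(s))\hookrightarrow ma\mid mo\hookrightarrow ma\in s,\exists\ell'.\ell'@L(s)\in mo\wedge\mathrm{hd}(\ell')=f,\mathrm{reduce}(mo,f,L(s))\ne\emptyset\}$, $\{mo\hookrightarrow ma\in s\mid L(s)\notin\mathrm{pos}(mo)\}$ and $\{\ell@L(s).i\hookrightarrow\ell@L(s).i\mid\ell\in\mathcal{L},1\le i\le\#f\}$. Goals are directly dependent if their obligation positions intersect; dependency is its transitive closure. For a dependency class $K$ of $\mathrm{deriv}(s,f)$, $\mathrm{gcp}(K)$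 is the greatest common prefix of its announcement positions and $\mathrm{lift}(K)$ removes that prefix from all positions in $K$. $\delta(s,f)=\{(\mathrm{lift}(K),\mathrm{gcp}(K))\mid K\}$; $\mathit{out}(s,f)=\{(\ell\to r)@p\mid\ell\to r\in\mathcal{R},f(x_1,\dots,x_{\#f})@L(s)\hookrightarrow\ell@p\in s,x_i\in\mathbb{V}\}$. The non-linear set automaton splits $\mathit{out}$: $\mathit{out}_L(s,f)$ consists of its elements with linear $\ell$, $\mathit{out}_{NL}(s,f)$ of those with non-linear $\ell$. For $X\in\{L,NL\}$: $\mathit{matches}_X(s,p,t)=\{(\ell\to r)@p.q\mid(\ell\to r)@q\in\mathit{out}_X(s,\mathrm{hd}(t|_{p.L(s)}))\}$. Configuration trees: $ct::=\mathit{bud}(s,p)\mid\mathit{node}(s,p,cts)$, $cts$ finite possibly empty set of configuration trees; $\mathit{buds}(ct)$, $\mathit{nodes}(ct)$ are the configurations labelling bud/node vertices. $\mathit{grow}(ct,s,p,t)$ replaces every $\mathit{bud}(s,p)$ in $ct$ by $\mathit{node}(s,p,\{\mathit{bud}(s',p.p')\mid(s',p')\in\delta(s,\mathrm{hd}(t|_{p.L(s)}))\})$. $\mathit{prune}(\mathit{bud}(s,p),q)=\mathit{bud}(s,p)$; $\mathit{prune}(\mathit{node}(s,p,cts),q)=\mathit{bud}(s,p)$ if $p.L(s)=q$, else $\mathit{node}(s,p,\{\mathit{prune}(c,q)\mid c\in cts\})$. $ct[p]$ is the subtree of $ct$ whose root configuration $(s,q)$ has $q.L(s)=p$. Strategy: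 a function that, whenever $\mathit{buds}(ct)\cup am\cup reds_L\cup en\ne\emptyset$, selects an element of that set. Procedure $\textsc{NormalizeNonLinear}(t_0,\mathit{select})$: $t:=t_0$; $reds_L,am,dis,en:=\emptyset$; $ct:=\mathit{bud}(s_0,\epsilon)$. While $\mathit{buds}(ct)$, $reds_L$, $en$ or $am$ is nonempty, select $a$. (a) If $a=(s,p)\in\mathit{buds}(ct)$: $ct:=\mathit{grow}(ct,s,p,t)$; $reds_L:=reds_L\cup\mathit{matches}_L(s,p,t)$; $am:=am\cup\mathit{matches}_{NL}(s,p,t)$. (b) If $a=(\ell\to r)@p\in am$: remove it from $am$; add it to $en$ if $t|_p$ is consistent with $\pi(\ell)$, else to $dis$. (c) If $a=(\ell\to r)@p\in reds_L\cup en$: let $N=\bigcup\{\mathit{matches}_{NL}(s,q,t)\mid(s,q)\in\mathit{nodes}(ct[p])\}$; set $reds_L:=reds_L\setminus\bigcup\{\mathit{matches}_L(s,q,t)\mid(s,q)\in\mathit{nodes}(ct[p])\}$; $en:=en\setminus N$; $dis:=dis\setminus N$; $rem:=\{(\ell'\to r')@q\in en\cup dis\mid\exists P\in\pi(\ell'):|P|\ge2\wedge\exists q'\in P: q.q'\le p\}$; $en:=en\setminus rem$; $dis:=dis\setminus rem$; $am:=(am\setminus N)\cup rem$; then $ct:=\mathit{prune}(ct,p)$ and $t:=t[(\ell\to r)@p]$. After the loop return $t$. *)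

(* Defs.v *)
From Stdlib Require Import List Relations.
Import ListNotations.
Set Implicit Arguments.

Inductive term (F V : Type) : Type :=
| Var (x : V)
| App (f : F) (args : list (term F V)).
Arguments Var {F V} x.
Arguments App {F V} f args.

(* Positions: lists of positive integers (argument indices start at 1). *)
Definition pos := list nat.
Definition prefix (p q : pos) : Prop := exists r, q = p ++ r.

Fixpoint upd_nth {A} (g : A -> A) (n : nat) (l : list A) : list A :=
  match l, n with
  | [], _ => []
  | a :: l', 0 => g a :: l'
  | a :: l', S n' => a :: upd_nth g n' l'
  end.

Section Terms.
Context {F V : Type}.
Notation term := (term F V).

Fixpoint subterm (t : term) (p : pos) : option term :=
  match p with
  | [] => Some t
  | i :: p' =>
      match t with
      | Var _ => None
      | App _ args =>
          match i with
          | 0 => None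
          | S j => match nth_error args j with
                   | Some u => subterm u p'
                   | None => None
                   end
          end
      end
  end.

(* t[u]_p  (only meaningful for p in D(t)) *)
Fixpoint replace (p : pos) (t u : term) {struct p} : term :=
  match p with
  | [] => u
  | i :: p' =>
      match t with
      | Var x => Var x
      | App f args => App f (upd_nth (fun a => replace p' a u) (i - 1) args)
      end
  end.

Fixpoint subst (sigma : V -> term) (t : term) : term :=
  match t with
  | Var x => sigma x
  | App f args => App f (map (subst sigma) args)
  end.

Definition head (t : term) : option F :=
  match t with Var _ => None | App f _ => Some f end.

Definition is_var (t : term) : Prop := exists x, t = Var x.

Definition occurs (x : V) (t : term) : Prop := exists p, subterm t p = Some (Var x).

Definition ground (t : term) : Prop := forall x, ~ occurs x t.

Definition wf (ar : F -> nat) (t : term) : Prop :=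
  forall p f args, subterm t p = Some (App f args) -> length args = ar f.

(* l is linear: every block of pi(l) is a singleton,
   i.e. |pi(l)| = |E(l)| *)
Definition linear (l : term) : Prop :=
  forall p q x, subterm l p = Some (Var x) -> subterm l q = Some (Var x) -> p = q.

(* u is consistent with pi(l): u|_p = u|_q for p,q in the same block *)
Definition consistent (l u : term) : Prop :=
  forall p q x, subterm l p = Some (Var x) -> subterm l q = Some (Var x) ->
    subterm u p = subterm u q.

Definition rule := (term * term)%type.

Definition isTRS (ar : F -> nat) (R : list rule) : Prop :=
  R <> [] /\
  forall l r, In (l, r) R ->
    ~ is_var l /\ (forall x, occurs x r -> occurs x l) /\ wf ar l /\ wf ar r.

Definition rewrite_step (R : list rule) (t t' : term) : Prop :=
  exists l r p sigma, In (l, r) R /\ subterm t p = Some (subst sigma l) /\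
    t' = replace p t (subst sigma r).

Definition rewrites (R : list rule) : term -> term -> Prop :=
  clos_refl_trans term (rewrite_step R).

Definition normal_form (R : list rule) (t : term) : Prop :=
  forall l r p sigma, In (l, r) R -> subterm t p <> Some (subst sigma l).

End Terms.

(* A match goal  mo |-> ma : obligation (a set of l'@p) and announcement l@p *)
Record goal (F V : Type) := Goal {
  gobl : (term F V * pos) -> Prop;
  gann : (term F V * pos) }.
Arguments Goal {F V} gobl gann.
Arguments gobl {F V} g _.
Arguments gann {F V} g.

Definition state (F V : Type) := goal F V -> Prop.

Section Automaton.
Context {F V : Type} (ar : F -> nat) (R : list (@rule F V)).
Notation term := (term F V).
Notation goal := (goal F V).
Notation state := (state F V).
Notation rule := (@rule F V).

Definition lhs : list term := map fst R.

Definition obl_pos (mo : (term * pos) -> Prop) : pos -> Prop :=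
  fun p => exists l, mo (l, p).

Definition s0 : state :=
  fun g => exists l, In l lhs /\ g = Goal (fun e => e = (l, [])) (l, []).

Definition reduce (mo : (term * pos) -> Prop) (f : F) (p : pos) : (term * pos) -> Prop :=
  fun e =>
    (mo e /\ snd e <> p) \/
    (exists l' i u, mo (l', p) /\ 1 <= i <= ar f /\ subterm l' [i] = Some u /\
       ~ is_var u /\ e = (u, p ++ [i])).

Section WithL.
Variable L : state -> pos.

Definition deriv (s : state) (f : F) : state :=
  fun g =>
    (exists mo ma, s (Goal mo ma) /\
       (exists l', mo (l', L s) /\ head l' = Some f) /\
       (exists e, reduce mo f (L s) e) /\
       g = Goal (reduce mo f (L s)) ma)
    \/ (s g /\ ~ obl_pos (gobl g) (L s))
    \/ (exists l i, In l lhs /\ 1 <= i <= ar f /\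
          g = Goal (fun e => e = (l, L s ++ [i])) (l, L s ++ [i])).

Definition ddep (g1 g2 : goal) : Prop :=
  exists p, obl_pos (gobl g1) p /\ obl_pos (gobl g2) p.

Definition dep_class (D K : state) : Prop :=
  exists g, D g /\
    forall g', K g' <-> (D g' /\
      clos_refl_trans goal (fun a b => D a /\ D b /\ ddep a b) g g').

Definition is_gcp (K : state) (p : pos) : Prop :=
  (forall g, K g -> prefix p (snd (gann g))) /\
  (forall p', (forall g, K g -> prefix p' (snd (gann g))) -> prefix p' p).

Definition drop_prefix (p q : pos) : pos := skipn (length p) q.

Definition lift_goal (p : pos) (g : goal) : goal :=
  Goal (fun e => exists l q, gobl g (l, q) /\ e = (l, drop_prefix p q))
       (fst (gann g), drop_prefix p (snd (gann g))).

Definition lift (p : pos) (K : state) : state :=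
  fun g => exists g0, K g0 /\ g = lift_goal p g0.

Definition delta (s : state) (f : F) : (state * pos) -> Prop :=
  fun sp => exists K, dep_class (deriv s f) K /\ is_gcp K (snd sp) /\
    fst sp = lift (snd sp) K.

Definition out_gen (X : term -> Prop) (s : state) (f : F) : (rule * pos) -> Prop :=
  fun rp => In (fst rp) R /\ X (fst (fst rp)) /\
    exists xs, length xs = ar f /\ Forall is_var xs /\
      s (Goal (fun e => e = (App f xs, L s)) (fst (fst rp), snd rp)).

Definition out_L := out_gen linear.
Definition out_NL := out_gen (fun l => ~ linear l).

Definition matches_gen (X : term -> Prop) (s : state) (p : pos) (t : term)
  : (rule * pos) -> Prop :=
  fun rp => exists f args q, subterm t (p ++ L s) = Some (App f args) /\
    out_gen X s f (fst rp, q) /\ snd rp = p ++ q.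

Definition matches_L := matches_gen linear.
Definition matches_NL := matches_gen (fun l => ~ linear l).

Inductive reachable : state -> Prop :=
| reach0 : reachable s0
| reachS s f s' p' : reachable s -> delta s f (s', p') -> reachable s'.

Definition valid_labelling : Prop :=
  forall s, reachable s -> exists mo l, s (Goal mo (l, [])) /\ obl_pos mo (L s).

Inductive ctree : Type :=
| Bud (s : state) (p : pos)
| Node (s : state) (p : pos) (kids : list ctree).

Inductive InBud : (state * pos) -> ctree -> Prop :=
| ib_here s p : InBud (s, p) (Bud s p)
| ib_kid c s p kids k : In k kids -> InBud c k -> InBud c (Node s p kids).

Inductive InNode : (state * pos) -> ctree -> Prop :=
| in_here s p kids : InNode (s, p) (Node s p kids)
| in_kid c s p kids k : In k kids -> InNode c k -> InNode c (Node s p kids).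

Inductive GrowR (s : state) (p : pos) (kids : list ctree) : ctree -> ctree -> Prop :=
| gr_bud_eq : GrowR s p kids (Bud s p) (Node s p kids)
| gr_bud_ne s' p' : (s', p') <> (s, p) -> GrowR s p kids (Bud s' p') (Bud s' p')
| gr_node s' p' cs cs' : Forall2 (GrowR s p kids) cs cs' ->
    GrowR s p kids (Node s' p' cs) (Node s' p' cs').

Fixpoint prune (ct : ctree) (q : pos) : ctree :=
  match ct with
  | Bud s p => Bud s p
  | Node s p cs =>
      if list_eq_dec PeanoNat.Nat.eq_dec (p ++ L s) q then Bud s p
      else Node s p (map (fun c => prune c q) cs)
  end.

Inductive Subtree : ctree -> ctree -> Prop :=
| st_refl c : Subtree c c
| st_kid c s p kids k : In k kids -> Subtree c k -> Subtree c (Node s p kids).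

Definition root_cfg (ct : ctree) : state * pos :=
  match ct with Bud s p => (s, p) | Node s p _ => (s, p) end.

Definition subtree_at (ct : ctree) (p : pos) (c : ctree) : Prop :=
  Subtree c ct /\ snd (root_cfg c) ++ L (fst (root_cfg c)) = p.

Record pstate := PState {
  ptm : term;
  pct : ctree;
  preds : (rule * pos) -> Prop;
  pam : (rule * pos) -> Prop;
  pdis : (rule * pos) -> Prop;
  pen : (rule * pos) -> Prop }.

Definition item := ((state * pos) + (rule * pos))%type.

Definition selectable (st : pstate) (a : item) : Prop :=
  match a with
  | inl c => InBud c (pct st)
  | inr rp => pam st rp \/ preds st rp \/ pen st rp
  end.

Definition strategy (select : pstate -> item) : Prop :=
  forall st, (exists a, selectable st a) -> selectable st (select st).

Definition setU {A} (X Y : A -> Prop) : A -> Prop := fun a => X a \/ Y a.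
Definition setD {A} (X Y : A -> Prop) : A -> Prop := fun a => X a /\ ~ Y a.
Definition set0 {A} : A -> Prop := fun _ => False.

Inductive Step (select : pstate -> item) : pstate -> pstate -> Prop :=
| step_bud st s p f args kids ct' :
    select st = inl (s, p) ->
    InBud (s, p) (pct st) ->
    subterm (ptm st) (p ++ L s) = Some (App f args) ->
    (forall c, In c kids <-> exists s' p', delta s f (s', p') /\ c = Bud s' (p ++ p')) ->
    GrowR s p kids (pct st) ct' ->
    Step select st
      (PState (ptm st) ct'
              (setU (preds st) (matches_L s p (ptm st)))
              (setU (pam st) (matches_NL s p (ptm st)))
              (pdis st) (pen st))
| step_am_en st rl p u :
    select st = inr (rl, p) ->
    pam st (rl, p) ->
    subterm (ptm st) p = Some u ->
    consistent (fst rl) u ->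
    Step select st
      (PState (ptm st) (pct st) (preds st)
              (setD (pam st) (fun a => a = (rl, p)))
              (pdis st) (setU (pen st) (fun a => a = (rl, p))))
| step_am_dis st rl p u :
    select st = inr (rl, p) ->
    pam st (rl, p) ->
    subterm (ptm st) p = Some u ->
    ~ consistent (fst rl) u ->
    Step select st
      (PState (ptm st) (pct st) (preds st)
              (setD (pam st) (fun a => a = (rl, p)))
              (setU (pdis st) (fun a => a = (rl, p))) (pen st))
| step_rewrite st l r p c sigma :
    select st = inr ((l, r), p) ->
    (preds st ((l, r), p) \/ pen st ((l, r), p)) ->
    subtree_at (pct st) p c ->
    subterm (ptm st) p = Some (subst sigma l) ->
    let t := ptm st in
    let N := fun a => exists sq, InNode sq c /\ matches_NL (fst sq) (snd sq) t a in
    let ML := fun a => exists sq, InNode sq c /\ matches_L (fst sq) (snd sq) t a in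
    let en1 := setD (pen st) N in
    let dis1 := setD (pdis st) N in
    let rem := fun (a : rule * pos) =>
      setU en1 dis1 a /\
      exists x q1 q2 q', q1 <> q2 /\
        subterm (fst (fst a)) q1 = Some (Var x) /\
        subterm (fst (fst a)) q2 = Some (Var x) /\
        subterm (fst (fst a)) q' = Some (Var x) /\
        prefix (snd a ++ q') p in
    Step select st
      (PState (replace p t (subst sigma r)) (prune (pct st) p)
              (setD (preds st) ML)
              (setU (setD (pam st) N) rem)
              (setD dis1 rem) (setD en1 rem)).

Definition init_pstate (t0 : term) : pstate :=
  PState t0 (Bud s0 []) set0 set0 set0 set0.

Definition finished (st : pstate) : Prop :=
  (forall c, ~ InBud c (pct st)) /\ (forall a, ~ preds st a) /\
  (forall a, ~ pen st a) /\ (forall a, ~ pam st a).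

Definition normalize_returns (select : pstate -> item) (t0 t : term) : Prop :=
  exists st, clos_refl_trans pstate (Step select) (init_pstate t0) st /\
    finished st /\ ptm st = t.

End WithL.
End Automaton.

Definition finite_type (A : Type) : Prop := exists l : list A, forall a, In a l.

(* Main.v *)
Require Import Defs.
From Stdlib Require Import List Relations Classical FunctionalExtensionality PropExtensionality Lia.
Import ListNotations.


Lemma prefix_refl (p : pos) : prefix p p.
Proof. exists []. now rewrite app_nil_r. Qed.

Lemma prefix_trans (a b c : pos) : prefix a b -> prefix b c -> prefix a c.
Proof. intros [r1 ->] [r2 ->]. exists (r1 ++ r2). now rewrite app_assoc. Qed.

Lemma prefix_app (a r : pos) : prefix a (a ++ r).
Proof. now exists r. Qed.

Lemma prefix_len (a b : pos) : prefix a b -> length a <= length b.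
Proof. intros [r ->]. rewrite length_app. lia. Qed.

Lemma prefix_antisym (a b : pos) : prefix a b -> prefix b a -> a = b.
Proof.
  intros [r1 H1] [r2 H2]. subst b.
  assert (length r1 = 0).
  { apply (f_equal (@length nat)) in H2. rewrite !length_app in H2. lia. }
  destruct r1; [now rewrite app_nil_r| discriminate].
Qed.

Lemma prefix_app_l (p a b : pos) : prefix (p ++ a) (p ++ b) -> prefix a b.
Proof. intros [r H]. exists r. rewrite <- app_assoc in H. now apply app_inv_head in H. Qed.

Lemma prefix_app_l2 (p a b : pos) : prefix a b -> prefix (p ++ a) (p ++ b).
Proof. intros [r ->]. exists r. now rewrite app_assoc. Qed.

Lemma prefix_common (a b y : pos) : prefix a y -> prefix b y -> prefix a b \/ prefix b a.
Proof.
  revert b y. induction a as [|i a IH]; intros b y Ha Hb.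
  - left. now exists b.
  - destruct b as [|j b]. { right. now exists (i :: a). }
    destruct Ha as [r1 Ha]. destruct Hb as [r2 Hb]. subst y. simpl in Hb. injection Hb as -> Hb.
    destruct (IH b (a ++ r1) (prefix_app _ _) (ex_intro _ r2 Hb)) as [[r ->]|[r ->]].
    + left. now exists r.
    + right. now exists r.
Qed.

Lemma prefix_cons_inv (i : nat) (a b : pos) : prefix (i :: a) (i :: b) -> prefix a b.
Proof. intros [r H]. injection H as H. now exists r. Qed.

Definition pprefix (z y : pos) : Prop := prefix z y /\ z <> y.

Lemma pprefix_snoc (z y : pos) (i : nat) : pprefix z (y ++ [i]) -> z = y \/ pprefix z y.
Proof.
  intros [[r Hr] Hne].
  destruct r as [|k r] using rev_ind.
  - rewrite app_nil_r in Hr. subst. congruence.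
  - rewrite app_assoc in Hr. apply app_inj_tail in Hr as [-> ->].
    destruct r as [|m r'].
    + left. now rewrite app_nil_r.
    + right. split. { now exists (m :: r'). } intros E.
      apply (f_equal (@length nat)) in E. rewrite length_app in E. simpl in E. lia.
Qed.

Lemma drop_prefix_app (p r : pos) : drop_prefix p (p ++ r) = r.
Proof. unfold drop_prefix. induction p; simpl; auto. Qed.

Lemma drop_prefix_eq (p q : pos) : prefix p q -> q = p ++ drop_prefix p q.
Proof. intros [r ->]. now rewrite drop_prefix_app. Qed.

Lemma drop_prefix_app2 (p q d : pos) : prefix p q -> drop_prefix p (q ++ d) = drop_prefix p q ++ d.
Proof. intros [r ->]. rewrite <- app_assoc, !drop_prefix_app. reflexivity. Qed.

Section TermLemmas.
Context {F V : Type}.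

Lemma subterm_app (t : term F V) (p q : pos) :
  subterm t (p ++ q) = match subterm t p with Some u => subterm u q | None => None end.
Proof.
  revert t. induction p as [|i p IH]; intros t; simpl; auto.
  destruct t as [x|f args]; auto. destruct i; auto.
  destruct (nth_error args i); auto.
Qed.

Lemma subterm_app_some (t u : term F V) (p q : pos) :
  subterm t p = Some u -> subterm t (p ++ q) = subterm u q.
Proof. intros H. rewrite subterm_app, H. reflexivity. Qed.

Lemma subterm_subst (sigma : V -> term F V) (l u : term F V) (d : pos) :
  subterm l d = Some u -> subterm (subst sigma l) d = Some (subst sigma u).
Proof.
  revert l. induction d as [|i d IH]; intros l H; simpl in *.
  - congruence.
  - destruct l as [x|f args]; [discriminate|]. destruct i; [discriminate|].
    simpl. rewrite nth_error_map. destruct (nth_error args i) eqn:E; [|discriminate].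
    simpl. now apply IH.
Qed.

Lemma consistent_subst (sigma : V -> term F V) (l : term F V) : consistent l (subst sigma l).
Proof.
  intros p q x Hp Hq. rewrite (subterm_subst sigma _ _ _ Hp), (subterm_subst sigma _ _ _ Hq). reflexivity.
Qed.

Lemma nth_error_upd {A} (g : A -> A) (n : nat) (l : list A) :
  nth_error (upd_nth g n l) n = option_map g (nth_error l n).
Proof. revert n. induction l as [|a l IH]; intros [|n]; simpl; auto. Qed.

Lemma nth_error_upd_ne {A} (g : A -> A) (n m : nat) (l : list A) :
  n <> m -> nth_error (upd_nth g n l) m = nth_error l m.
Proof.
  revert n m. induction l as [|a l IH]; intros [|n] [|m] H; simpl; auto; try congruence.
  all: apply IH; congruence.
Qed.

Lemma subterm_replace_prefix (t u w : term F V) (y e : pos) :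
  subterm t y = Some u -> subterm (replace (y ++ e) t w) y = Some (replace e u w).
Proof.
  revert t. induction y as [|i y IH]; intros t H; simpl in *.
  - congruence.
  - destruct t as [x|f args]; [discriminate|]. destruct i as [|j]; [discriminate|].
    simpl. replace (j - 0) with j by lia. rewrite nth_error_upd.
    destruct (nth_error args j) eqn:E; [|discriminate]. simpl. now apply IH.
Qed.

Lemma subterm_replace_indep (t w : term F V) (p y : pos) :
  subterm t p <> None -> ~ prefix y p -> ~ prefix p y ->
  subterm (replace p t w) y = subterm t y.
Proof.
  revert t y. induction p as [|i p IH]; intros t y Hv H1 H2.
  - exfalso. apply H2. now exists y.
  - destruct y as [|j y]. { exfalso. apply H1. now exists (i :: p). }
    simpl in Hv. destruct t as [x|f args]; [contradiction|].
    destruct i as [|i]; [contradiction|].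
    simpl. replace (i - 0) with i by lia.
    destruct j as [|j]; auto.
    destruct (PeanoNat.Nat.eq_dec i j) as [->|Hne].
    + rewrite nth_error_upd. destruct (nth_error args j) eqn:E; [|contradiction]. simpl.
      apply IH; auto.
      * intros [r Hr]. apply H1. exists r. simpl. congruence.
      * intros [r Hr]. apply H2. exists r. simpl. congruence.
    + rewrite nth_error_upd_ne by auto. reflexivity.
Qed.

Lemma subterm_replace_head (t w : term F V) (y e : pos) f args :
  subterm t y = Some (App f args) -> e <> [] ->
  exists args', subterm (replace (y ++ e) t w) y = Some (App f args').
Proof.
  intros H He. rewrite (subterm_replace_prefix t (App f args) w y e H).
  destruct e; [congruence|]. simpl. eauto.
Qed.

Lemma subterm_var_pprefix (l : term F V) (p1 e : pos) x :
  subterm l p1 = Some (Var x) -> pprefix e p1 -> exists f args, subterm l e = Some (App f args).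
Proof.
  intros H [[r ->] Hne]. rewrite subterm_app in H.
  destruct (subterm l e) as [v|]; [|discriminate].
  destruct r as [|i r]. { rewrite app_nil_r in Hne. congruence. }
  destruct v as [y|f args]; [simpl in H; discriminate|]. eauto.
Qed.

End TermLemmas.

Lemma prefix_len_eq (a b : pos) : prefix a b -> length a = length b -> a = b.
Proof.
  intros [r ->] H. rewrite length_app in H. destruct r; [now rewrite app_nil_r|simpl in H; lia].
Qed.

Section Auto.
Context {F V : Type} (ar : F -> nat) (R : list (@rule F V)) (L : state F V -> pos).
Hypothesis HR : isTRS ar R.

Definition GoodGoal (g : goal F V) : Prop :=
  In (fst (gann g)) (lhs R) /\ (exists e, gobl g e) /\
  forall l' r, gobl g (l', r) ->
    exists d, r = snd (gann g) ++ d /\ subterm (fst (gann g)) d = Some l' /\ ~ is_var l'.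

Definition Antichain (s : state F V) : Prop :=
  forall g1 g2 r1 r2, s g1 -> s g2 -> obl_pos (gobl g1) r1 -> obl_pos (gobl g2) r2 ->
    prefix r1 r2 -> r1 = r2.

Definition GoodState (s : state F V) : Prop := (forall g, s g -> GoodGoal g) /\ Antichain s.

Lemma lhs_props (l : term F V) : In l (lhs R) ->
  wf ar l /\ ~ is_var l /\ exists r, In (l, r) R.
Proof.
  intros H. unfold lhs in H. apply in_map_iff in H as [[l0 r] [Heq Hin]]. simpl in Heq. subst l0.
  destruct HR as [_ H]. destruct (H _ _ Hin) as (H1 & _ & H3 & _). eauto.
Qed.

Lemma s0_good : GoodState (s0 R).
Proof.
  split.
  - intros g [l [Hl ->]]. split; [exact Hl|]. split; [eexists; reflexivity|].
    intros l' r H. simpl in H. injection H as -> ->. exists []. simpl. split; auto.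
    split; auto. apply (lhs_props l Hl).
  - intros g1 g2 r1 r2 [l1 [_ ->]] [l2 [_ ->]] [x1 H1] [x2 H2] _. simpl in *.
    injection H1 as _ ->. injection H2 as _ ->. reflexivity.
Qed.

Lemma deriv_obl (s : state F V) f g r : deriv ar R L s f g -> obl_pos (gobl g) r ->
  (exists g0, s g0 /\ obl_pos (gobl g0) r /\ r <> L s) \/ exists i, r = L s ++ [i].
Proof.
  intros [(mo & ma & Hs & _ & _ & ->)|[[Hs Hn]|(l & i & _ & _ & ->)]] [l' Hr]; simpl in *.
  - destruct Hr as [[Hm Hne]|(l0 & i & u & _ & _ & _ & _ & He)].
    + left. exists (Goal mo ma). simpl. split; auto. split; auto. now exists l'.
    + right. exists i. now injection He as _ ->.
  - left. exists g. split; auto. split. { now exists l'. } intros ->. apply Hn. now exists l'.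
  - right. exists i. now injection Hr as _ ->.
Qed.

Lemma deriv_good (s : state F V) f : GoodState s -> (exists g, s g /\ obl_pos (gobl g) (L s)) ->
  GoodState (deriv ar R L s f).
Proof.
  intros [Hg Ha] [gL [HgL HoL]]. split.
  - intros g [(mo & ma & Hs & _ & Hne & ->)|[[Hs Hn]|(l & i & Hl & _ & ->)]].
    + destruct (Hg _ Hs) as (Hin & _ & Hob). simpl in *. split; [exact Hin|]. split; [exact Hne|].
      intros l' r [[Hm _]|(l0 & i & u & Hm & _ & Hu & Hnv & He)].
      * exact (Hob _ _ Hm).
      * injection He as -> ->. destruct (Hob _ _ Hm) as (d & Hd & Hsub & _).
        exists (d ++ [i]). rewrite Hd, app_assoc. split; auto. split; auto.
        rewrite (subterm_app_some _ _ _ _ Hsub). exact Hu.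
    + exact (Hg _ Hs).
    + simpl. split; [exact Hl|]. split; [eexists; reflexivity|]. intros l' r H. injection H as -> ->.
      exists []. rewrite app_nil_r. split; auto. split; auto. apply (lhs_props l Hl).
  - intros g1 g2 r1 r2 H1 H2 Ho1 Ho2 Hp.
    destruct (deriv_obl _ _ _ _ H1 Ho1) as [(g1' & Hs1 & Ho1' & Hne1)|[i ->]];
    destruct (deriv_obl _ _ _ _ H2 Ho2) as [(g2' & Hs2 & Ho2' & Hne2)|[j ->]].
    + exact (Ha _ _ _ _ Hs1 Hs2 Ho1' Ho2' Hp).
    + destruct (list_eq_dec PeanoNat.Nat.eq_dec r1 (L s ++ [j])) as [E|E]; [exact E|].
      destruct (pprefix_snoc r1 (L s) j (conj Hp E)) as [->|[Hp' _]]; [congruence|].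
      exfalso. apply Hne1. exact (Ha _ _ _ _ Hs1 HgL Ho1' HoL Hp').
    + exfalso. apply Hne2. symmetry. apply (Ha _ _ _ _ HgL Hs2 HoL Ho2').
      eapply prefix_trans; [apply prefix_app|exact Hp].
    + apply prefix_len_eq; auto. rewrite !length_app. reflexivity.
Qed.

Lemma class_sub (D K : state F V) (g : goal F V) : dep_class D K -> K g -> D g.
Proof. intros [g0 [_ HK]] H. apply HK in H. tauto. Qed.

Lemma good_sub (D K : state F V) : GoodState D -> (forall g, K g -> D g) -> GoodState K.
Proof.
  intros [Hg Ha] Hs. split; [auto|]. intros g1 g2 r1 r2 H1 H2. apply Ha; auto.
Qed.

Lemma gcp_obl (K : state F V) p g l r : GoodState K -> is_gcp K p -> K g -> gobl g (l, r) -> prefix p r.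
Proof.
  intros [Hg _] [Hp _] HK Ho. destruct (Hg _ HK) as (_ & _ & Hob).
  destruct (Hob _ _ Ho) as (d & -> & _). eapply prefix_trans; [exact (Hp _ HK)|apply prefix_app].
Qed.

Lemma lift_good (K : state F V) p : GoodState K -> is_gcp K p -> GoodState (lift p K).
Proof.
  intros HG Hgcp. split.
  - intros g [g0 [HK ->]]. destruct (proj1 HG _ HK) as (Hin & [[e1 e2] He] & Hob).
    split; [exact Hin|]. split.
    { exists (e1, drop_prefix p e2). simpl. eauto. }
    intros l' r (l1 & q1 & Ho & E). injection E as -> ->.
    destruct (Hob _ _ Ho) as (d & -> & Hsub & Hnv). exists d. simpl. split; auto.
    apply drop_prefix_app2. apply (proj1 Hgcp _ HK).
  - intros g1 g2 r1 r2 [g1' [H1 ->]] [g2' [H2 ->]] [l1 (a1 & b1 & Ho1 & E1)] [l2 (a2 & b2 & Ho2 & E2)] Hp.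
    injection E1 as -> ->. injection E2 as -> ->.
    pose proof (gcp_obl _ _ _ _ _ HG Hgcp H1 Ho1) as P1.
    pose proof (gcp_obl _ _ _ _ _ HG Hgcp H2 Ho2) as P2.
    rewrite (drop_prefix_eq _ _ P1), (drop_prefix_eq _ _ P2) in *.
    idtac.
    destruct P1 as [c1 ->]. destruct P2 as [c2 ->]. rewrite !drop_prefix_app in *.
    assert (E : p ++ c1 = p ++ c2).
    { apply (proj2 HG _ _ _ _ H1 H2 (ex_intro _ a1 Ho1) (ex_intro _ a2 Ho2)). now apply prefix_app_l2. }
    apply app_inv_head in E. now subst.
Qed.

Hypothesis HL : valid_labelling ar R L.

Lemma reachable_good s : reachable ar R L s -> GoodState s.
Proof.
  induction 1 as [|s f s' p' Hr IH Hd].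
  - apply s0_good.
  - destruct Hd as (K & Hc & Hg & E). simpl in *. subst s'.
    apply lift_good; auto. apply good_sub with (D := deriv ar R L s f).
    + apply deriv_good; auto. destruct (HL s Hr) as (mo & l & Hs & Ho). exists (Goal mo (l, [])). auto.
    + intros g. apply class_sub; auto.
Qed.

End Auto.

Section Trees.
Context {F V : Type} (L : state F V -> pos).
Implicit Types (s : state F V) (kids cs : list (@ctree F V)) (a b c ct X Y Z k : @ctree F V) (A : list pos) (sq : state F V * pos).

Definition ctree_ind' (P : @ctree F V -> Prop)
  (Hb : forall s p, P (Bud s p))
  (Hn : forall s p kids, (forall k, In k kids -> P k) -> P (Node s p kids)) :
  forall ct, P ct :=
  fix rec ct :=
    match ct with
    | Bud s p => Hb s p
    | Node s p kids => Hn s p kids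
        ((fix aux (l : list ctree) : forall k, In k l -> P k :=
            match l with
            | [] => fun k H => False_ind _ H
            | k0 :: l' => fun k H =>
                match H with
                | or_introl e => eq_ind k0 P (rec k0) k e
                | or_intror H' => aux l' k H'
                end
            end) kids)
    end.

Definition insc (c : state F V * pos) : pos := snd c ++ L (fst c).
Definition ins (ct : @ctree F V) : pos := insc (root_cfg ct).
Definition is_node (ct : @ctree F V) : Prop := exists s p kids, ct = Node s p kids.

Inductive Occ : list pos -> @ctree F V -> @ctree F V -> Prop :=
| occ_refl c : Occ [] c c
| occ_kid A X s p kids k : In k kids -> Occ A X k -> Occ (A ++ [p ++ L s]) X (Node s p kids).

Lemma occ_trans A1 Z ct A2 X : Occ A1 Z ct -> Occ A2 X Z -> Occ (A2 ++ A1) X ct.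
Proof.
  induction 1 as [c|A X' s p kids k Hk Ho IH]; intros H.
  - now rewrite app_nil_r.
  - rewrite app_assoc. econstructor; eauto.
Qed.

Lemma subtree_occ c ct : Subtree c ct -> exists A, Occ A c ct.
Proof.
  induction 1 as [c|c s p kids k Hk _ [A IH]].
  - exists []. constructor.
  - eexists. econstructor; eauto.
Qed.

Lemma occ_first A Y c : Occ A Y c -> (A = [] /\ Y = c) \/ In (ins c) A.
Proof.
  destruct 1 as [c|A X s p kids k Hk Ho].
  - now left.
  - right. apply in_or_app. right. now left.
Qed.

Lemma innode_occ sq ct : InNode sq ct -> exists A X, Occ A X ct /\ is_node X /\ root_cfg X = sq.
Proof.
  induction 1 as [s p kids|c s p kids k Hk _ (A & X & Ho & Hn & Hr)].
  - exists [], (Node s p kids). split; [constructor|]. split; [do 3 eexists; reflexivity|reflexivity].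
  - exists (A ++ [p ++ L s]), X. split; auto. econstructor; eauto.
Qed.

Lemma occ_innode A X ct : Occ A X ct -> is_node X -> InNode (root_cfg X) ct.
Proof.
  induction 1 as [c|A X s p kids k Hk Ho IH]; intros Hn.
  - destruct Hn as (s & p & kids & ->). constructor.
  - econstructor; eauto.
Qed.

Lemma inbud_occ sq ct : InBud sq ct -> exists A s p, Occ A (Bud s p) ct /\ sq = (s, p).
Proof.
  induction 1 as [s p|sq s p kids k Hk _ (A & s' & p' & Ho & ->)].
  - exists [], s, p. split; [constructor|reflexivity].
  - eexists _, s', p'. split; [econstructor; eauto|reflexivity].
Qed.

Lemma occ_inbud A s p ct : Occ A (Bud s p) ct -> InBud (s, p) ct.
Proof.
  intros H. remember (Bud s p) as X. induction H; subst; econstructor; eauto.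
Qed.

Lemma occ_split A X ct y : Occ A X ct -> In y A ->
  exists A1 A2 Z, Occ A1 Z ct /\ Occ A2 X Z /\ A = A2 ++ A1 /\ ins Z = y /\ is_node Z.
Proof.
  induction 1 as [c|A X s p kids k Hk Ho IH]; intros Hy; [destruct Hy|].
  apply in_app_or in Hy as [Hy|[<-|[]]].
  - destruct (IH Hy) as (A1 & A2 & Z & H1 & H2 & -> & Hi & Hn).
    exists (A1 ++ [p ++ L s]), A2, Z. split; [econstructor; eauto|]. split; auto.
    split; auto. now rewrite app_assoc.
  - exists [], (A ++ [p ++ L s]), (Node s p kids). split; [constructor|].
    split; [econstructor; eauto|]. split; [now rewrite app_nil_r|]. split; [reflexivity|].
    do 3 eexists; reflexivity.
Qed.

Lemma grow_root s p kids a b : GrowR s p kids a b -> root_cfg a = root_cfg b.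
Proof. destruct 1; reflexivity. Qed.

Lemma forall2_in {T1 T2} (P : T1 -> T2 -> Prop) l1 l2 y :
  Forall2 P l1 l2 -> In y l2 -> exists x, In x l1 /\ P x y.
Proof.
  induction 1 as [|x y' l1 l2 Hp _ IH]; intros Hy; [destruct Hy|].
  destruct Hy as [<-|Hy].
  - exists x. split; auto. now left.
  - destruct (IH Hy) as (x' & H1 & H2). exists x'. split; auto. now right.
Qed.

Lemma forall2_in_l {T1 T2} (P : T1 -> T2 -> Prop) l1 l2 x :
  Forall2 P l1 l2 -> In x l1 -> exists y, In y l2 /\ P x y.
Proof.
  induction 1 as [|x' y l1 l2 Hp _ IH]; intros Hx; [destruct Hx|].
  destruct Hx as [<-|Hx].
  - exists y. split; auto. now left.
  - destruct (IH Hx) as (y' & H1 & H2). exists y'. split; auto. now right.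
Qed.

Lemma forall2_map {T1 T2 T3} (P : T1 -> T2 -> Prop) (f : T1 -> T3) (g : T2 -> T3) l1 l2 :
  Forall2 P l1 l2 -> (forall x y, P x y -> f x = g y) -> map f l1 = map g l2.
Proof. induction 1 as [|x y l1 l2 Hp _ IH]; intros Hf; simpl; auto. f_equal; auto. Qed.

Lemma forall2_fun {T1 T2} (P : T1 -> T2 -> Prop) l l1 l2 :
  (forall x, In x l -> forall y1 y2, P x y1 -> P x y2 -> y1 = y2) ->
  Forall2 P l l1 -> Forall2 P l l2 -> l1 = l2.
Proof.
  intros Hf H1. revert l2. induction H1 as [|x y1 l l1' Hp _ IH]; intros l2 H2; inversion H2; subst; auto.
  f_equal.
  - eapply Hf; eauto. now left.
  - apply IH; auto. intros x' Hx'. apply Hf. now right.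
Qed.

Lemma grow_fun s p kids a : forall b1 b2, GrowR s p kids a b1 -> GrowR s p kids a b2 -> b1 = b2.
Proof.
  induction a as [s' p'|s' p' cs IH] using ctree_ind'; intros b1 b2 H1 H2.
  - inversion H1; subst; inversion H2; subst; congruence.
  - inversion H1; subst. inversion H2; subst. f_equal.
    eapply forall2_fun; eauto.
Qed.

Lemma grow_occ s p kids a b A X : GrowR s p kids a b -> Occ A X a ->
  exists X', Occ A X' b /\ GrowR s p kids X X'.
Proof.
  intros Hg Ho. revert b Hg. induction Ho as [c|A X s' p' cs k Hk Ho IH]; intros b Hg.
  - exists b. split; [constructor|auto].
  - inversion Hg; subst.
    match goal with H : Forall2 _ cs ?x |- _ => rename x into cs'; rename H into HF end.
    destruct (forall2_in_l _ _ _ _ HF Hk) as (k' & Hk' & Hg').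
    destruct (IH _ Hg') as (X' & Ho' & HX). exists X'. split; auto. econstructor; eauto.
Qed.

Lemma grow_innode_back s p kids sq : forall a b, GrowR s p kids a b ->
  (forall sq' k, In k kids -> ~ InNode sq' k) -> InNode sq b -> InNode sq a \/ sq = (s, p).
Proof.
  intros a. induction a as [s' p'|s' p' cs IH] using ctree_ind'; intros b Hg Hk Hi.
  - inversion Hg; subst.
    + inversion Hi; subst; auto. exfalso. eapply Hk; eauto.
    + inversion Hi.
  - inversion Hg; subst.
    match goal with H : Forall2 _ cs ?x |- _ => rename x into cs'; rename H into HF end.
    inversion Hi; subst.
    + left. constructor.
    + match goal with H : In ?k' cs', H2 : InNode sq ?k' |- _ => rename k' into k'; rename H into Hk'; rename H2 into Hi' end.
      destruct (forall2_in _ _ _ _ HF Hk') as (k0 & Hk0 & Hg0).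
      destruct (IH k0 Hk0 _ Hg0 Hk Hi') as [H|H]; auto. left. econstructor; eauto.
Qed.


Lemma prune_root c q : root_cfg (prune L c q) = root_cfg c.
Proof.
  destruct c as [s p|s p kids]; simpl; auto.
  destruct (list_eq_dec PeanoNat.Nat.eq_dec (p ++ L s) q); reflexivity.
Qed.

Lemma prune_node_eq s p kids q : p ++ L s <> q -> prune L (Node s p kids) q = Node s p (map (fun c => prune L c q) kids).
Proof. intros H. simpl. destruct (list_eq_dec PeanoNat.Nat.eq_dec (p ++ L s) q); congruence. Qed.

Lemma prune_node_eq2 s p kids : prune L (Node s p kids) (p ++ L s) = Bud s p.
Proof. simpl. destruct (list_eq_dec PeanoNat.Nat.eq_dec (p ++ L s) (p ++ L s)); congruence. Qed.

Lemma prune_is_node X q : is_node (prune L X q) -> is_node X /\ ins X <> q.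
Proof.
  intros (s & p & kids & E). destruct X as [s' p'|s' p' cs]; simpl in E; [discriminate|].
  destruct (list_eq_dec PeanoNat.Nat.eq_dec (p' ++ L s') q) as [e|e]; [discriminate|].
  split; [do 3 eexists; reflexivity|exact e].
Qed.

Lemma prune_is_node_fwd X q : is_node X -> ins X <> q -> is_node (prune L X q).
Proof.
  intros (s & p & kids & ->) H. unfold ins, insc in H; simpl in H. rewrite prune_node_eq by auto.
  do 3 eexists; reflexivity.
Qed.

Lemma prune_occ_fwd A X ct q : Occ A X ct -> ~ In q A -> Occ A (prune L X q) (prune L ct q).
Proof.
  induction 1 as [c|A X s p kids k Hk Ho IH]; intros Hq; [constructor|].
  rewrite prune_node_eq.
  - econstructor. { apply in_map. exact Hk. } apply IH. intros H. apply Hq. apply in_or_app. now left.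
  - intros E. apply Hq. apply in_or_app. right. left. exact E.
Qed.

Lemma prune_occ_back q : forall ct A X', Occ A X' (prune L ct q) ->
  exists X, Occ A X ct /\ X' = prune L X q /\ ~ In q A.
Proof.
  intros ct. induction ct as [s p|s p kids IH] using ctree_ind'; intros A X' Ho.
  - simpl in Ho. inversion Ho; subst. exists (Bud s p). split; [constructor|]. split; auto.
  - destruct (list_eq_dec PeanoNat.Nat.eq_dec (p ++ L s) q) as [e|e].
    + subst q. rewrite prune_node_eq2 in Ho. inversion Ho; subst.
      exists (Node s p kids). split; [constructor|]. split; [now rewrite prune_node_eq2|auto].
    + rewrite prune_node_eq in Ho by auto. inversion Ho; subst.
      * exists (Node s p kids). split; [constructor|]. split; [now rewrite prune_node_eq|auto].
      * match goal with H : In ?k (map _ kids), H2 : Occ ?A0 X' ?k |- _ => rename H into Hk; rename H2 into Ho'; rename A0 into A0 end.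
        apply in_map_iff in Hk as (k0 & <- & Hk0).
        destruct (IH k0 Hk0 _ _ Ho') as (X & HoX & -> & Hn).
        exists X. split; [econstructor; eauto|]. split; auto.
        intros H. apply in_app_or in H as [H|[H|[]]]; auto.
Qed.

End Trees.

Section TI.
Context {F V : Type} (ar : F -> nat) (R : list (@rule F V)) (L : state F V -> pos).
Hypothesis HR : isTRS ar R.
Hypothesis HL : valid_labelling ar R L.
Implicit Types (s : state F V) (kids cs : list (@ctree F V)) (a b c ct X Y Z k : @ctree F V) (A anc : list pos) (sq cf : state F V * pos) (t : term F V).

Definition Obl cf (y : pos) : Prop :=
  exists g r, fst cf g /\ obl_pos (gobl g) r /\ y = snd cf ++ r.
Definition Ob cf (y : pos) : Prop := exists y0, Obl cf y0 /\ prefix y0 y.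

Definition TC anc cf : Prop :=
  forall g l q', fst cf g -> gann g = (l, q') -> forall d u, subterm l d = Some u -> ~ is_var u ->
    In (snd cf ++ q' ++ d) anc \/ exists l' e, gobl g (l', q' ++ e) /\ prefix e d.

Definition CfgOK anc cf : Prop :=
  reachable ar R L (fst cf) /\
  (forall y z, Obl cf y -> pprefix z y -> In z anc) /\
  (forall y, Obl cf y -> ~ In y anc) /\
  (forall y z, In y anc -> pprefix z y -> In z anc) /\
  TC anc cf.

Inductive TI t : list pos -> @ctree F V -> Prop :=
| ti_bud anc s p : CfgOK anc (s, p) -> TI t anc (Bud s p)
| ti_node anc s p kids f args :
    CfgOK anc (s, p) ->
    subterm t (p ++ L s) = Some (App f args) ->
    (forall cf, In cf (map root_cfg kids) <->
       exists s' p', delta ar R L s f (s', p') /\ cf = (s', p ++ p')) ->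
    (forall k, In k kids -> TI t ((p ++ L s) :: anc) k) ->
    (forall k y, In k kids -> Ob (root_cfg k) y -> Ob (s, p) y /\ y <> p ++ L s) ->
    (forall k1 k2, In k1 kids -> In k2 kids -> root_cfg k1 = root_cfg k2 -> k1 = k2) ->
    (forall k1 k2 y, In k1 kids -> In k2 kids -> root_cfg k1 <> root_cfg k2 ->
       Ob (root_cfg k1) y -> Ob (root_cfg k2) y -> False) ->
    TI t anc (Node s p kids).

Lemma TI_cfg t anc ct : TI t anc ct -> CfgOK anc (root_cfg ct).
Proof. destruct 1; auto. Qed.

Lemma Obl_ins anc cf : CfgOK anc cf -> Obl cf (insc L cf).
Proof.
  intros [Hr _]. destruct (HL _ Hr) as (mo & l & Hs & Ho).
  exists (Goal mo (l, [])), (L (fst cf)). split; auto.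
Qed.

Lemma Ob_of_Obl cf y : Obl cf y -> Ob cf y.
Proof. intros H. exists y. split; auto. apply prefix_refl. Qed.

Lemma TI_occ t anc ct A X : TI t anc ct -> Occ L A X ct -> TI t (A ++ anc) X.
Proof.
  intros HT Ho. revert anc HT. induction Ho as [c|A X s p kids k Hk Ho IH]; intros anc HT; auto.
  inversion HT; subst. rewrite <- app_assoc. simpl. apply IH. auto.
Qed.

Lemma occ_O t anc k A X : TI t anc k -> Occ L A X k ->
  Ob (root_cfg k) (ins L X) /\ forall y, In y A -> Ob (root_cfg k) y.
Proof.
  intros HT Ho. revert anc HT. induction Ho as [c|A X s p kids k Hk Ho IH]; intros anc HT.
  - split; [|intros y []]. apply Ob_of_Obl. eapply Obl_ins. eapply TI_cfg; eauto.
  - inversion HT; subst.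
    match goal with H : forall k y, In k kids -> Ob _ y -> _ |- _ => rename H into Hsub end.
    destruct (IH _ (ltac:(auto) : TI t ((p ++ L s) :: anc) k)) as [G1 G2].
    split.
    + exact (proj1 (Hsub _ _ Hk G1)).
    + intros y Hy. apply in_app_or in Hy as [Hy|[<-|[]]].
      * exact (proj1 (Hsub _ _ Hk (G2 _ Hy))).
      * apply Ob_of_Obl. exact (Obl_ins anc (s, p) ltac:(assumption)).
Qed.

Lemma same_occ t anc ct : TI t anc ct -> forall A1 X1 A2 X2,
  Occ L A1 X1 ct -> Occ L A2 X2 ct ->
  (In (ins L X1) A2 \/ ins L X1 = ins L X2) -> (In (ins L X2) A1 \/ ins L X2 = ins L X1) ->
  X1 = X2 /\ A1 = A2.
Proof.
  induction 1 as [anc s p Hc|anc s p kids f args Hc Hsub Hkids HTk IH Hsubk Heqk Hdisj];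
    intros A1 X1 A2 X2 Ho1 Ho2 H1 H2.
  - inversion Ho1; subst. inversion Ho2; subst. auto.
  - inversion Ho1 as [c1|A1' X1' s1 p1 kids1 k1 Hk1 Ho1']; subst;
    inversion Ho2 as [c2|A2' X2' s2 p2 kids2 k2 Hk2 Ho2']; subst; auto.
    +
      exfalso. destruct (occ_O _ _ _ _ _ (HTk _ Hk2) Ho2') as [Ho _].
      destruct H2 as [[]|H2]. apply (proj2 (Hsubk _ _ Hk2 Ho)). rewrite H2. reflexivity.
    + exfalso. destruct (occ_O _ _ _ _ _ (HTk _ Hk1) Ho1') as [Ho _].
      destruct H1 as [[]|H1]. apply (proj2 (Hsubk _ _ Hk1 Ho)). rewrite H1. reflexivity.
    + destruct (occ_O _ _ _ _ _ (HTk _ Hk1) Ho1') as [O1 O1A].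
      destruct (occ_O _ _ _ _ _ (HTk _ Hk2) Ho2') as [O2 O2A].
      assert (H1' : In (ins L X1) A2' \/ ins L X1 = ins L X2).
      { destruct H1 as [H1|H1]; auto. apply in_app_or in H1 as [H1|[H1|[]]]; auto.
        exfalso. apply (proj2 (Hsubk _ _ Hk1 O1)). auto. }
      assert (H2' : In (ins L X2) A1' \/ ins L X2 = ins L X1).
      { destruct H2 as [H2|H2]; auto. apply in_app_or in H2 as [H2|[H2|[]]]; auto.
        exfalso. apply (proj2 (Hsubk _ _ Hk2 O2)). auto. }
      assert (Hk : k1 = k2).
      { apply Heqk; auto. destruct (classic (root_cfg k1 = root_cfg k2)) as [E|E]; auto.
        exfalso. apply (Hdisj k1 k2 (ins L X1) Hk1 Hk2 E O1).
        destruct H1' as [H|H]; [now apply O2A|rewrite H; exact O2]. }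
      subst k2. destruct (IH _ Hk1 _ _ _ _ Ho1' Ho2' H1' H2') as [-> ->]. auto.
Qed.

End TI.

Section Grow.
Context {F V : Type} (ar : F -> nat) (R : list (@rule F V)) (L : state F V -> pos).
Hypothesis HR : isTRS ar R.
Hypothesis HL : valid_labelling ar R L.
Implicit Types (s : state F V) (kids cs : list (@ctree F V)) (a b c ct X Y Z k : @ctree F V) (A anc : list pos) (sq cf : state F V * pos) (t : term F V).

Notation CfgOK := (CfgOK ar R L).
Notation deriv := (deriv ar R L).
Notation delta := (delta ar R L).

Lemma deriv_good_r s f : reachable ar R L s -> GoodState R (deriv s f).
Proof.
  intros Hr. apply deriv_good; auto. apply (reachable_good ar R L HR HL _ Hr).
  destruct (HL _ Hr) as (mo & l & Hs & Ho). exists (Goal mo (l, [])). auto.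
Qed.

Lemma L_obl s : reachable ar R L s -> exists g, s g /\ obl_pos (gobl g) (L s).
Proof. intros Hr. destruct (HL _ Hr) as (mo & l & Hs & Ho). exists (Goal mo (l, [])). auto. Qed.

Lemma obl_lift (K : state F V) p p' y : GoodState R K -> is_gcp K p' -> Obl (lift p' K, p ++ p') y ->
  exists g0 r0, K g0 /\ obl_pos (gobl g0) r0 /\ y = p ++ r0 /\ prefix p' r0.
Proof.
  intros HG Hg (g & r & [g0 [HK ->]] & [l (l1 & q1 & Ho & E)] & ->). simpl in *.
  injection E as -> ->. pose proof (gcp_obl R _ _ _ _ _ HG Hg HK Ho) as P.
  exists g0, q1. split; auto. split; [now exists l1|]. split; auto.
  rewrite <- app_assoc, <- (drop_prefix_eq _ _ P). reflexivity.
Qed.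

Lemma deriv_tc anc s p f g0 l q0 d u :
  CfgOK anc (s, p) -> deriv s f g0 -> gann g0 = (l, q0) -> subterm l d = Some u -> ~ is_var u ->
  In (p ++ q0 ++ d) ((p ++ L s) :: anc) \/ exists l' e, gobl g0 (l', q0 ++ e) /\ prefix e d.
Proof.
  intros Hc Hd Ha Hsu Hnv. destruct Hc as (Hr & _ & _ & _ & Htc).
  pose proof (proj1 (reachable_good ar R L HR HL _ Hr)) as HG.
  destruct Hd as [(mo & ma & Hs & (l'' & Hm'' & Hh) & Hne & ->)|[[Hs Hn]|(l1 & i & Hl1 & Hi & ->)]].
  - simpl in Ha. subst ma.
    destruct (Htc _ _ _ Hs eq_refl d u Hsu Hnv) as [H|(l' & e & Hm & Hpre)].
    + left. now right.
    + destruct (list_eq_dec PeanoNat.Nat.eq_dec (q0 ++ e) (L s)) as [E|E].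
      * destruct (HG _ Hs) as (Hin & _ & Hob). simpl in Hin, Hob.
        rewrite E in Hm.
        destruct (Hob _ _ Hm'') as (d1 & Hd1 & Hs1 & _).
        destruct (Hob _ _ Hm) as (d2 & Hd2 & Hs2 & _).
        rewrite Hd1 in Hd2. apply app_inv_head in Hd2. subst d2.
        rewrite Hs1 in Hs2. injection Hs2 as <-.
        rewrite Hd1 in E. apply app_inv_head in E. subst e.
        destruct l'' as [x|g ys]; [discriminate|]. simpl in Hh. injection Hh as ->.
        destruct (lhs_props ar R HR _ Hin) as (Hwf & _ & _).
        destruct Hpre as [[|i d2] ->].
        { left. left. rewrite app_nil_r. rewrite Hd1. reflexivity. }
        rewrite (subterm_app_some _ _ _ _ Hs1) in Hsu. simpl in Hsu.
        destruct i as [|j]; [discriminate|].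
        destruct (nth_error ys j) as [y|] eqn:Ey; [|discriminate].
        right. exists y, (d1 ++ [S j]). split.
        -- simpl. right. exists (App f ys), (S j), y. split; [exact Hm''|].
           split.
           ++ split; [lia|]. rewrite <- (Hwf _ _ _ Hs1). apply nth_error_Some. congruence.
           ++ split; [simpl; now rewrite Ey|]. split.
              ** intros [x ->]. destruct d2; simpl in Hsu. { injection Hsu as <-. apply Hnv. now exists x. } discriminate.
              ** rewrite Hd1, <- app_assoc. reflexivity.
        -- exists d2. rewrite <- app_assoc. reflexivity.
      * right. exists l', e. split; auto. simpl. left. split; auto.
  - destruct (Htc _ _ _ Hs Ha d u Hsu Hnv) as [H|H]; auto. left. now right.
  - simpl in Ha. injection Ha as -> ->. right. eexists _, []. split.
    + simpl. now rewrite app_nil_r.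
    + now exists d.
Qed.

Lemma kid_cfg anc s p f s' p' :
  CfgOK anc (s, p) -> delta s f (s', p') -> CfgOK ((p ++ L s) :: anc) (s', p ++ p').
Proof.
  intros Hc Hd. pose proof Hc as (Hr & Ha & Hb & Hcl & Htc).
  destruct Hd as (K & HK & Hg & E). simpl in *. subst s'.
  pose proof (deriv_good_r s f Hr) as HGD.
  assert (HGK : GoodState R K) by (apply (good_sub R (deriv s f)); auto; intros g; eapply class_sub; eauto).
  pose proof (Obl_ins ar R L HL _ _ Hc) as HLo. unfold insc in HLo; simpl in HLo.
  assert (Hchar : forall y, Obl (lift p' K, p ++ p') y ->
     (Obl (s, p) y /\ y <> p ++ L s) \/ exists i, y = (p ++ L s) ++ [i]).
  { intros y Hy. destruct (obl_lift K p p' y HGK Hg Hy) as (g0 & r0 & HK0 & Ho0 & -> & _).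
    destruct (deriv_obl ar R L s f g0 r0 (class_sub L _ _ _ HK HK0) Ho0) as [(g1 & Hs1 & Ho1 & Hne)|[i ->]].
    - left. split. { exists g1, r0. auto. } intros E. apply app_inv_head in E. auto.
    - right. exists i. now rewrite app_assoc. }
  split; [|split; [|split; [|split]]].
  - simpl. eapply reachS; [exact Hr|]. exists K. simpl. split; [exact HK|]. split; [exact Hg|reflexivity].
  - intros y z Hy Hz. destruct (Hchar y Hy) as [[Hy' _]|[i ->]].
    + right. eapply Ha; eauto.
    + destruct (pprefix_snoc _ _ _ Hz) as [->|Hz']; [now left|]. right. eapply Ha; eauto.
  - intros y Hy Hin. destruct (Hchar y Hy) as [[Hy' Hne]|[i ->]].
    + destruct Hin as [E|Hin]; [congruence|]. eapply Hb; eauto.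
    + destruct Hin as [E|Hin].
      * apply (f_equal (@length nat)) in E. rewrite !length_app in E. simpl in E. lia.
      * apply (Hb _ HLo). eapply Hcl; eauto. split; [apply prefix_app|].
        intros E. apply (f_equal (@length nat)) in E. rewrite !length_app in E. simpl in E. lia.
  - intros y z [<-|Hy] Hz.
    + right. eapply Ha; eauto.
    + right. eapply Hcl; eauto.
  - intros g l q' [g0 [HK0 ->]] Ha' d u Hsu Hnv. simpl in Ha'.
    destruct (gann g0) as [l0 q0] eqn:Eg. simpl in Ha'. injection Ha' as -> <-.
    assert (Pq : prefix p' q0) by (pose proof (proj1 Hg _ HK0) as X; now rewrite Eg in X).
    destruct (deriv_tc anc s p f g0 l q0 d u Hc (class_sub L _ _ _ HK HK0) Eg Hsu Hnv) as [H|(l' & e & Ho & Pe)].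
    + left. simpl. replace ((p ++ p') ++ drop_prefix p' q0 ++ d) with (p ++ q0 ++ d); [exact H|]. rewrite (drop_prefix_eq _ _ Pq) at 1. now rewrite !app_assoc.
    + right. exists l', e. split; auto. simpl. exists l', (q0 ++ e). split; auto.
      now rewrite drop_prefix_app2.
Qed.


Lemma kid_O_sub anc s p f s' p' y :
  CfgOK anc (s, p) -> delta s f (s', p') -> Ob (s', p ++ p') y -> Ob (s, p) y /\ y <> p ++ L s.
Proof.
  intros Hc Hd [y0 [Hy0 Py]]. pose proof Hc as (Hr & _).
  destruct Hd as (K & HK & Hg & E). simpl in *. subst s'.
  pose proof (deriv_good_r s f Hr) as HGD.
  assert (HGK : GoodState R K) by (apply (good_sub R (deriv s f)); auto; intros g; eapply class_sub; eauto).
  pose proof (Obl_ins ar R L HL _ _ Hc) as HLo. unfold insc in HLo; simpl in HLo.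
  destruct (L_obl s Hr) as (gL & HgL & HoL).
  destruct (obl_lift K p p' y0 HGK Hg Hy0) as (g0 & r0 & HK0 & Ho0 & -> & _).
  destruct (deriv_obl ar R L s f g0 r0 (class_sub L _ _ _ HK HK0) Ho0) as [(g1 & Hs1 & Ho1 & Hne)|[i ->]].
  - split.
    + exists (p ++ r0). split; auto. exists g1, r0. auto.
    + intros ->. apply prefix_app_l in Py. apply Hne.
      apply (proj2 (reachable_good ar R L HR HL _ Hr) _ _ _ _ Hs1 HgL Ho1 HoL Py).
  - split.
    + exists (p ++ L s). split; auto. eapply prefix_trans; [|exact Py]. rewrite app_assoc. apply prefix_app.
    + intros ->. apply prefix_len in Py. rewrite !length_app in Py. simpl in Py. lia.
Qed.

Lemma rt_sym {T} (rel : T -> T -> Prop) : (forall x y : T, rel x y -> rel y x) ->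
  forall x y : T, clos_refl_trans T rel x y -> clos_refl_trans T rel y x.
Proof.
  intros Hs x y H. induction H.
  - apply rt_step. auto.
  - apply rt_refl.
  - eapply rt_trans; eauto.
Qed.

Lemma class_merge (D K1 K2 : state F V) g1 g2 :
  dep_class D K1 -> dep_class D K2 -> K1 g1 -> K2 g2 -> ddep g1 g2 -> K1 = K2.
Proof.
  intros [b1 [Hb1 H1]] [b2 [Hb2 H2]] Hg1 Hg2 Hdd.
  set (rel := fun x y : goal F V => D x /\ D y /\ ddep x y).
  assert (Hsym : forall x y, rel x y -> rel y x).
  { intros x y (Ha & Hb & p & Hp1 & Hp2). split; auto. split; auto. exists p. auto. }
  apply H1 in Hg1 as [Dg1 R1]. apply H2 in Hg2 as [Dg2 R2].
  assert (R12 : clos_refl_trans _ rel b1 b2).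
  { eapply rt_trans; [exact R1|]. eapply rt_trans; [apply rt_step; split; [exact Dg1|split; [exact Dg2|exact Hdd]]|].
    apply rt_sym; auto. }
  apply functional_extensionality. intros g. apply propositional_extensionality.
  rewrite H1, H2. split; intros [Dg Rg]; split; auto.
  - eapply rt_trans; [|exact Rg]. apply rt_sym; auto.
  - eapply rt_trans; [exact R12|exact Rg].
Qed.

Lemma gcp_unique (K : state F V) p1 p2 : is_gcp K p1 -> is_gcp K p2 -> p1 = p2.
Proof.
  intros H1 H2. apply prefix_antisym.
  - apply (proj2 H2). apply (proj1 H1).
  - apply (proj2 H1). apply (proj1 H2).
Qed.

Lemma kid_O_disj anc s p f s1 p1 s2 p2 y :
  CfgOK anc (s, p) -> delta s f (s1, p1) -> delta s f (s2, p2) ->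
  (s1, p ++ p1) <> (s2, p ++ p2) -> Ob (s1, p ++ p1) y -> Ob (s2, p ++ p2) y -> False.
Proof.
  intros Hc Hd1 Hd2 Hne [y1 [Hy1 P1]] [y2 [Hy2 P2]]. pose proof Hc as (Hr & _).
  pose proof (deriv_good_r s f Hr) as HGD.
  destruct Hd1 as (K1 & HK1 & Hg1 & E1). destruct Hd2 as (K2 & HK2 & Hg2 & E2). simpl in *. subst s1 s2.
  assert (HGK1 : GoodState R K1) by (apply (good_sub R (deriv s f)); auto; intros g; eapply class_sub; eauto).
  assert (HGK2 : GoodState R K2) by (apply (good_sub R (deriv s f)); auto; intros g; eapply class_sub; eauto).
  destruct (obl_lift K1 p p1 y1 HGK1 Hg1 Hy1) as (g1 & r1 & HK1' & Ho1 & -> & _).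
  destruct (obl_lift K2 p p2 y2 HGK2 Hg2 Hy2) as (g2 & r2 & HK2' & Ho2 & -> & _).
  assert (Er : r1 = r2).
  { destruct (prefix_common _ _ _ P1 P2) as [H|H]; apply prefix_app_l in H.
    - exact (proj2 HGD _ _ _ _ (class_sub L _ _ _ HK1 HK1') (class_sub L _ _ _ HK2 HK2') Ho1 Ho2 H).
    - symmetry. exact (proj2 HGD _ _ _ _ (class_sub L _ _ _ HK2 HK2') (class_sub L _ _ _ HK1 HK1') Ho2 Ho1 H). }
  subst r2.
  assert (EK : K1 = K2).
  { apply (class_merge _ _ _ g1 g2 HK1 HK2 HK1' HK2'). exists r1. auto. }
  subst K2. rewrite (gcp_unique _ _ _ Hg1 Hg2) in Hne. apply Hne. reflexivity.
Qed.

Lemma grow_TI t s p kids f args :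
  subterm t (p ++ L s) = Some (App f args) ->
  (forall c, In c kids <-> exists s' p', delta s f (s', p') /\ c = Bud s' (p ++ p')) ->
  forall anc a b, TI ar R L t anc a -> GrowR s p kids a b -> TI ar R L t anc b.
Proof.
  intros Ht Hkids anc a b HT. revert b.
  induction HT as [anc s0' p0 Hc|anc s0' p0 cs f0 args0 Hc Hsub Hroots HTk IH Hsubk Heqk Hdisj];
    intros b Hg.
  - inversion Hg; subst.
    + eapply (ti_node ar R L t anc _ _ kids f args); [exact Hc|exact Ht|..].
      * intros cf. rewrite in_map_iff. split.
        -- intros (k & <- & Hk). apply Hkids in Hk as (s' & p' & Hd & ->). eauto.
        -- intros (s' & p' & Hd & ->). eexists (Bud s' _). split; [reflexivity|]. apply Hkids. eauto.
      * intros k Hk. apply Hkids in Hk as (s' & p' & Hd & ->). constructor. eapply kid_cfg; eauto.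
      * intros k y Hk Hy. apply Hkids in Hk as (s' & p' & Hd & ->). eapply kid_O_sub; eauto.
      * intros k1 k2 Hk1 Hk2 E. apply Hkids in Hk1 as (s1 & p1 & _ & ->). apply Hkids in Hk2 as (s2 & p2 & _ & ->).
        simpl in E. injection E as -> ->. reflexivity.
      * intros k1 k2 y Hk1 Hk2 E. apply Hkids in Hk1 as (s1 & p1 & Hd1 & ->). apply Hkids in Hk2 as (s2 & p2 & Hd2 & ->).
        eapply kid_O_disj; eauto.
    + constructor. auto.
  - inversion Hg; subst.
    match goal with H : Forall2 _ cs ?x |- _ => rename x into cs'; rename H into HF end.
    assert (Hmap : map root_cfg cs = map root_cfg cs') by (eapply forall2_map; [exact HF|]; apply grow_root).
    apply (ti_node ar R L t anc s0' p0 cs' f0 args0 Hc Hsub).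
    + intros cf. rewrite <- Hmap. apply Hroots.
    + intros k' Hk'. destruct (forall2_in _ _ _ _ HF Hk') as (k & Hk & Hgk). eapply IH; eauto.
    + intros k' y Hk' Hy. destruct (forall2_in _ _ _ _ HF Hk') as (k & Hk & Hgk).
      rewrite <- (grow_root _ _ _ _ _ Hgk) in Hy. eauto.
    + intros k1' k2' Hk1' Hk2' E.
      destruct (forall2_in _ _ _ _ HF Hk1') as (k1 & Hk1 & Hg1).
      destruct (forall2_in _ _ _ _ HF Hk2') as (k2 & Hk2 & Hg2).
      rewrite <- (grow_root _ _ _ _ _ Hg1), <- (grow_root _ _ _ _ _ Hg2) in E.
      pose proof (Heqk _ _ Hk1 Hk2 E). subst k2. eapply grow_fun; eauto.
    + intros k1' k2' y Hk1' Hk2' E.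
      destruct (forall2_in _ _ _ _ HF Hk1') as (k1 & Hk1 & Hg1).
      destruct (forall2_in _ _ _ _ HF Hk2') as (k2 & Hk2 & Hg2).
      rewrite <- (grow_root _ _ _ _ _ Hg1), <- (grow_root _ _ _ _ _ Hg2) in *. eauto.
Qed.

End Grow.

Section Prune.
Context {F V : Type} (ar : F -> nat) (R : list (@rule F V)) (L : state F V -> pos).
Hypothesis HR : isTRS ar R.
Hypothesis HL : valid_labelling ar R L.
Implicit Types (s : state F V) (kids cs : list (@ctree F V)) (a b c ct X Y Z k : @ctree F V) (A anc : list pos) (sq cf : state F V * pos) (t : term F V).

Lemma ins_not_below anc s p q : CfgOK ar R L anc (s, p) -> ~ In q anc -> q <> p ++ L s -> ~ prefix q (p ++ L s).
Proof.
  intros Hc Hq Hne Hp. pose proof (Obl_ins ar R L HL _ _ Hc) as HLo. unfold insc in HLo; simpl in HLo.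
  apply Hq. destruct Hc as (_ & Ha & _). eapply Ha; [exact HLo|]. split; auto.
Qed.

Lemma head_after_replace t q w y f args :
  subterm t q <> None -> subterm t y = Some (App f args) -> ~ prefix q y ->
  exists args', subterm (replace q t w) y = Some (App f args').
Proof.
  intros Hv Hy Hq. destruct (classic (prefix y q)) as [[e ->]|Hyq].
  - eapply subterm_replace_head; [exact Hy|]. intros ->. apply Hq. rewrite app_nil_r. apply prefix_refl.
  - exists args. rewrite subterm_replace_indep; auto.
Qed.

Lemma prune_TI t q w : subterm t q <> None ->
  forall anc ct, TI ar R L t anc ct -> ~ In q anc -> TI ar R L (replace q t w) anc (prune L ct q).
Proof.
  intros Hv anc ct HT.
  induction HT as [anc s p Hc|anc s p cs f args Hc Hsub Hroots HTk IH Hsubk Heqk Hdisj]; intros Hq.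
  - simpl. constructor. auto.
  - destruct (list_eq_dec PeanoNat.Nat.eq_dec (p ++ L s) q) as [E|E].
    + subst q. rewrite prune_node_eq2. constructor. auto.
    + rewrite prune_node_eq by auto.
      destruct (head_after_replace t q w _ f args Hv Hsub (ins_not_below anc s p q Hc Hq (fun e => E (eq_sym e))))
        as [args' Hsub'].
      assert (Hmap : map root_cfg (map (fun c => prune L c q) cs) = map root_cfg cs).
      { rewrite map_map. apply map_ext. intros. apply prune_root. }
      apply (ti_node ar R L _ anc s p _ f args' Hc Hsub').
      * intros cf. rewrite Hmap. apply Hroots.
      * intros k' Hk'. apply in_map_iff in Hk' as (k & <- & Hk). apply IH; auto.
        intros [H|H]; auto.
      * intros k' y Hk' Hy. apply in_map_iff in Hk' as (k & <- & Hk). rewrite prune_root in Hy. eauto.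
      * intros k1' k2' Hk1' Hk2' Er. apply in_map_iff in Hk1' as (k1 & <- & Hk1).
        apply in_map_iff in Hk2' as (k2 & <- & Hk2). rewrite !prune_root in Er.
        rewrite (Heqk _ _ Hk1 Hk2 Er). reflexivity.
      * intros k1' k2' y Hk1' Hk2' Er. apply in_map_iff in Hk1' as (k1 & <- & Hk1).
        apply in_map_iff in Hk2' as (k2 & <- & Hk2). rewrite !prune_root in *. eauto.
Qed.

End Prune.

Section Keys.
Context {F V : Type} (ar : F -> nat) (R : list (@rule F V)) (L : state F V -> pos).
Hypothesis HR : isTRS ar R.
Hypothesis HL : valid_labelling ar R L.
Implicit Types (s : state F V) (kids cs : list (@ctree F V)) (a b c ct X Y Z k : @ctree F V) (A anc : list pos) (sq cf : state F V * pos) (t : term F V).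

Notation TI := (TI ar R L).
Notation CfgOK := (CfgOK ar R L).
Notation rep Xk cf t it := (matches_gen ar R L Xk (fst cf) (snd cf) t it).

Lemma app_vars_sub (f : F) (xs : list (term F V)) r u :
  Forall is_var xs -> subterm (App f xs) r = Some u -> ~ is_var u -> r = [].
Proof.
  intros Hx Hs Hnv. destruct r as [|i r]; auto. exfalso. simpl in Hs.
  destruct i as [|j]; [discriminate|]. destruct (nth_error xs j) as [y|] eqn:E; [|discriminate].
  apply nth_error_In in E. rewrite Forall_forall in Hx. destruct (Hx _ E) as [x ->].
  destruct r; simpl in Hs; [|discriminate]. injection Hs as <-. apply Hnv. now exists x.
Qed.

Lemma rep_nv t ct A X Xk l r q : TI t [] ct -> Occ L A X ct -> rep Xk (root_cfg X) t ((l, r), q) ->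
  (exists d0 u0, subterm l d0 = Some u0 /\ ~ is_var u0 /\ ins L X = q ++ d0) /\
  (forall d u, subterm l d = Some u -> ~ is_var u -> In (q ++ d) A \/ q ++ d = ins L X).
Proof.
  intros HT Ho Hm. pose proof (TI_cfg _ _ _ _ _ _ (TI_occ _ _ _ _ _ _ _ _ HT Ho)) as Hc.
  rewrite app_nil_r in Hc.
  destruct (root_cfg X) as [s p0] eqn:Er. unfold ins, insc. rewrite Er. simpl in *.
  destruct Hm as (f & args & q' & Hsub & (Hin & _ & xs & Hlen & Hvars & Hs) & Hq). simpl in *.
  subst q.
  destruct Hc as (Hr & _ & _ & _ & Htc).
  destruct (proj1 (reachable_good ar R L HR HL _ Hr) _ Hs) as (_ & _ & Hob). simpl in Hob.
  destruct (Hob (App f xs) (L s) eq_refl) as (d0 & Hd0 & Hs0 & Hnv0).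
  split.
  - exists d0, (App f xs). split; auto. split; auto. rewrite Hd0, app_assoc. reflexivity.
  - intros d u Hsu Hnv. destruct (Htc _ _ _ Hs eq_refl d u Hsu Hnv) as [H|(l' & e & He & Pe)].
    + left. simpl in H. rewrite app_assoc in H. exact H.
    + right. simpl in He. injection He as -> He. rewrite Hd0 in He. apply app_inv_head in He. subst e.
      destruct Pe as [r' ->]. rewrite (subterm_app_some _ _ _ _ Hs0) in Hsu.
      rewrite (app_vars_sub f xs r' u Hvars Hsu Hnv), app_nil_r, Hd0, app_assoc. reflexivity.
Qed.

Lemma key_same t ct A X B Y Xk1 Xk2 it :
  TI t [] ct -> Occ L A X ct -> Occ L B Y ct ->
  rep Xk1 (root_cfg X) t it -> rep Xk2 (root_cfg Y) t it -> X = Y /\ A = B.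
Proof.
  intros HT HoX HoY HX HY. destruct it as [[l r] q].
  destruct (rep_nv _ _ _ _ _ _ _ _ HT HoX HX) as [(d1 & u1 & Hs1 & Hn1 & E1) NX].
  destruct (rep_nv _ _ _ _ _ _ _ _ HT HoY HY) as [(d2 & u2 & Hs2 & Hn2 & E2) NY].
  eapply (same_occ ar R L HL t [] ct HT); eauto.
  - rewrite E1. apply (NY _ _ Hs1 Hn1).
  - rewrite E2. apply (NX _ _ Hs2 Hn2).
Qed.

Lemma key1 t ct p c A X Xk1 Xk2 it :
  TI t [] ct -> subtree_at L ct p c -> Occ L A X ct ->
  (exists sq, InNode sq c /\ rep Xk1 sq t it) -> rep Xk2 (root_cfg X) t it ->
  In p A \/ ins L X = p.
Proof.
  intros HT [Hst Hp] HoX (sq & Hin & Hm) HX.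
  destruct (subtree_occ L _ _ Hst) as [Ac Hoc].
  destruct (innode_occ L _ _ Hin) as (AY & Y & HoY & _ & <-).
  pose proof (occ_trans L _ _ _ _ _ Hoc HoY) as HoY'.
  destruct (key_same _ _ _ _ _ _ _ _ _ HT HoX HoY' HX Hm) as [<- ->].
  destruct (occ_first L _ _ _ HoY) as [[-> ->]|H].
  - right. exact Hp.
  - left. apply in_or_app. left. rewrite <- Hp. exact H.
Qed.

Lemma key2 t ct p c A X :
  TI t [] ct -> subtree_at L ct p c -> Occ L A X ct -> is_node X -> (In p A \/ ins L X = p) ->
  InNode (root_cfg X) c.
Proof.
  intros HT [Hst Hp] HoX HnX H.
  destruct (subtree_occ L _ _ Hst) as [Ac Hoc].
  destruct H as [H|H].
  - destruct (occ_split L _ _ _ _ HoX H) as (A1 & A2 & Z & HoZ & HoXZ & _ & HiZ & _).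
    assert (HZ : Z = c /\ A1 = Ac).
    { apply (same_occ ar R L HL t [] ct HT _ _ _ _ HoZ Hoc).
      - right. rewrite HiZ. unfold ins, insc. exact (eq_sym Hp).
      - right. rewrite HiZ. unfold ins, insc. exact Hp. }
    destruct HZ as [-> _]. exact (occ_innode L _ _ _ HoXZ HnX).
  - assert (HZ : X = c /\ A = Ac).
    { apply (same_occ ar R L HL t [] ct HT _ _ _ _ HoX Hoc).
      - right. rewrite H. unfold ins, insc. exact (eq_sym Hp).
      - right. rewrite H. unfold ins, insc. exact Hp. }
    destruct HZ as [-> _]. exact (occ_innode L [] _ _ (occ_refl L _) HnX).
Qed.

Lemma remaining ct p sq : InNode sq (prune L ct p) ->
  exists A X, Occ L A X ct /\ is_node X /\ root_cfg X = sq /\ ~ In p A /\ ins L X <> p.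
Proof.
  intros H. destruct (innode_occ L _ _ H) as (A & X' & Ho & Hn & Hr).
  destruct (prune_occ_back L p ct A X' Ho) as (X & HoX & -> & Hp).
  destruct (prune_is_node L X p Hn) as [HnX Hne].
  exists A, X. rewrite prune_root in Hr. auto.
Qed.

Lemma survive ct p A X : Occ L A X ct -> is_node X -> ~ In p A -> ins L X <> p ->
  InNode (root_cfg X) (prune L ct p).
Proof.
  intros Ho Hn Hp Hne. rewrite <- (prune_root L X p).
  apply (occ_innode L A). { apply prune_occ_fwd; auto. } apply prune_is_node_fwd; auto.
Qed.

Lemma matches_same t ct p w A X Xk it :
  TI t [] ct -> Occ L A X ct -> is_node X -> ~ In p A -> ins L X <> p -> subterm t p <> None ->
  (rep Xk (root_cfg X) (replace p t w) it <-> rep Xk (root_cfg X) t it).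
Proof.
  intros HT Ho (s & p0 & kids & ->) Hp Hne Hv.
  pose proof (TI_occ _ _ _ _ _ _ _ _ HT Ho) as HTX. rewrite app_nil_r in HTX.
  inversion HTX as [|anc' s' p' kids' f args Hc Hsub]; subst.
  unfold ins, insc in Hne. simpl in Hne.
  destruct (head_after_replace t p w _ f args Hv Hsub (ins_not_below ar R L HL A s p0 p Hc Hp (fun e => Hne (eq_sym e))))
    as [args' Hsub'].
  simpl. split.
  - intros (f1 & a1 & q & M1 & M2 & M3). rewrite Hsub' in M1. injection M1 as <- <-. exists f, args, q. auto.
  - intros (f1 & a1 & q & M1 & M2 & M3). rewrite Hsub in M1. injection M1 as <- <-. exists f, args', q. auto.
Qed.

Lemma not_below_nv t ct A X p y : TI t [] ct -> Occ L A X ct -> ~ In p A -> ins L X <> p ->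
  (In y A \/ y = ins L X) -> ~ prefix p y.
Proof.
  intros HT Ho Hp Hne Hy Hpy.
  pose proof (TI_cfg _ _ _ _ _ _ (TI_occ _ _ _ _ _ _ _ _ HT Ho)) as Hc. rewrite app_nil_r in Hc.
  pose proof (Obl_ins ar R L HL _ _ Hc) as HLo.
  destruct Hc as (_ & Ha & _ & Hcl & _).
  destruct (list_eq_dec PeanoNat.Nat.eq_dec p y) as [<-|E].
  - destruct Hy as [Hy|Hy]; auto.
  - apply Hp. destruct Hy as [Hy| ->].
    + eapply Hcl; eauto. split; auto.
    + eapply Ha; eauto. split; auto.
Qed.

End Keys.

Section DisKeep.
Context {F V : Type}.

Lemma dis_keep (t w : term F V) (p : pos) (l' u : term F V) (q : pos) :
  subterm t p <> None -> subterm t q = Some u -> ~ consistent l' u -> ~ is_var l' ->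
  (forall d v, subterm l' d = Some v -> ~ is_var v -> ~ prefix p (q ++ d)) ->
  ~ (exists x q1 q2 q'', q1 <> q2 /\ subterm l' q1 = Some (Var x) /\ subterm l' q2 = Some (Var x) /\
        subterm l' q'' = Some (Var x) /\ prefix (q ++ q'') p) ->
  exists u', subterm (replace p t w) q = Some u' /\ ~ consistent l' u'.
Proof.
  intros Hv Hq Hnc Hnvl Hnb Hnr.
  assert (Hw : exists p1 p2 x, subterm l' p1 = Some (Var x) /\ subterm l' p2 = Some (Var x) /\ subterm u p1 <> subterm u p2).
  { apply NNPP. intros H. apply Hnc. intros p1 p2 x H1 H2. apply NNPP. intros H3. apply H. eauto 6. }
  destruct Hw as (p1 & p2 & x & H1 & H2 & H3).
  assert (Hp12 : p1 <> p2) by (intros ->; auto).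
  destruct (classic (prefix q p)) as [[e ->]|Hqp].
  - assert (Inc : forall pi, subterm l' pi = Some (Var x) -> ~ prefix e pi /\ ~ prefix pi e).
    { intros pi Hpi. split.
      - intros He. destruct (list_eq_dec PeanoNat.Nat.eq_dec e pi) as [<-|Ene].
        + apply Hnr. exists x, p1, p2, e. repeat split; auto. apply prefix_refl.
        + destruct (subterm_var_pprefix l' pi e x Hpi (conj He Ene)) as (f & args & Hs).
          eapply Hnb; [exact Hs| |apply prefix_refl]. intros [y Hy]; discriminate.
      - intros He. apply Hnr. exists x, p1, p2, pi. repeat split; auto. now apply prefix_app_l2. }
    exists (replace e u w). split.
    + apply subterm_replace_prefix. exact Hq.
    + assert (Hve : subterm u e <> None) by (rewrite <- (subterm_app_some _ _ _ _ Hq); exact Hv).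
      intros Hc. apply H3.
      rewrite <- (subterm_replace_indep u w e p1 Hve (proj2 (Inc _ H1)) (proj1 (Inc _ H1))).
      rewrite <- (subterm_replace_indep u w e p2 Hve (proj2 (Inc _ H2)) (proj1 (Inc _ H2))).
      eapply Hc; eauto.
  - destruct (classic (prefix p q)) as [Hpq|Hpq].
    + exfalso. apply (Hnb [] l'); auto. now rewrite app_nil_r.
    + exists u. split; auto. rewrite subterm_replace_indep; auto.
Qed.

End DisKeep.

Section WF.
Context {F V : Type} (ar : F -> nat).

Lemma wf_sub (t u : term F V) p : wf ar t -> subterm t p = Some u -> wf ar u.
Proof.
  intros Hw Hs q f args Hq. apply (Hw (p ++ q)). rewrite (subterm_app_some _ _ _ _ Hs). exact Hq.
Qed.

Lemma subterm_subst_inv (sigma : V -> term F V) : forall p (r w : term F V),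
  subterm (subst sigma r) p = Some w ->
  (exists p1 p2 x, p = p1 ++ p2 /\ subterm r p1 = Some (Var x) /\ subterm (sigma x) p2 = Some w) \/
  (exists w0, subterm r p = Some w0 /\ w = subst sigma w0 /\ ~ is_var w0).
Proof.
  induction p as [|i p IH]; intros r w H.
  - destruct r as [x|g rs]; simpl in H.
    + left. exists [], [], x. auto.
    + right. exists (App g rs). injection H as <-. split; auto. split; auto. intros [x E]; discriminate.
  - destruct r as [x|g rs].
    + left. exists [], (i :: p), x. auto.
    + simpl in H. destruct i as [|j]; [discriminate|]. rewrite nth_error_map in H.
      destruct (nth_error rs j) as [rj|] eqn:E; [|discriminate]. simpl in H.
      destruct (IH rj w H) as [(p1 & p2 & x & -> & H1 & H2)|(w0 & H1 & H2 & H3)].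
      * left. exists (S j :: p1), p2, x. simpl. rewrite E. auto.
      * right. exists w0. simpl. rewrite E. auto.
Qed.

Lemma wf_subst (sigma : V -> term F V) (r : term F V) :
  wf ar r -> (forall x, occurs x r -> wf ar (sigma x)) -> wf ar (subst sigma r).
Proof.
  intros Hr Hs p f args Hp.
  destruct (subterm_subst_inv sigma p r _ Hp) as [(p1 & p2 & x & -> & H1 & H2)|(w0 & H1 & H2 & H3)].
  - apply (Hs x (ex_intro _ p1 H1) p2 f args H2).
  - destruct w0 as [x|g rs]; [exfalso; apply H3; now exists x|]. simpl in H2. injection H2 as -> ->.
    rewrite length_map. exact (Hr _ _ _ H1).
Qed.

Lemma length_upd {A} (g : A -> A) n (l : list A) : length (upd_nth g n l) = length l.
Proof. revert n. induction l; intros [|n]; simpl; auto. Qed.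

Lemma wf_replace (t u : term F V) p : wf ar t -> wf ar u -> subterm t p <> None -> wf ar (replace p t u).
Proof.
  intros Ht Hu Hv y f args Hy.
  destruct (classic (prefix p y)) as [[e ->]|H1].
  - destruct (subterm t p) as [v|] eqn:Ev; [|congruence].
    pose proof (subterm_replace_prefix t v u p [] Ev) as E. rewrite app_nil_r in E. simpl in E.
    rewrite (subterm_app_some _ _ _ _ E) in Hy. exact (Hu _ _ _ Hy).
  - destruct (classic (prefix y p)) as [[e ->]|H2].
    + destruct (subterm t y) as [v|] eqn:Ev.
      2:{ exfalso. apply Hv. rewrite subterm_app, Ev. reflexivity. }
      rewrite (subterm_replace_prefix t v u y e Ev) in Hy.
      destruct e as [|i e]. { exfalso. apply H1. rewrite app_nil_r. apply prefix_refl. }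
      destruct v as [x|g vs]; simpl in Hy; [discriminate|].
      injection Hy as -> <-. rewrite length_upd. exact (Ht _ _ _ Ev).
    + rewrite subterm_replace_indep in Hy; auto. exact (Ht _ _ _ Hy).
Qed.

Lemma wf_rewrite (R : list (@rule F V)) (t : term F V) l r p sigma :
  isTRS ar R -> In (l, r) R -> wf ar t -> subterm t p = Some (subst sigma l) ->
  wf ar (replace p t (subst sigma r)).
Proof.
  intros [_ HR] Hin Ht Hs. destruct (HR _ _ Hin) as (_ & Hocc & _ & Hwr).
  apply wf_replace; auto; [|rewrite Hs; discriminate].
  apply wf_subst; auto. intros x Hx. destruct (Hocc x Hx) as [q Hq].
  apply (wf_sub (subst sigma l) (sigma x) q); [exact (wf_sub _ _ _ Ht Hs)|].
  exact (subterm_subst sigma _ _ _ Hq).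
Qed.

End WF.

Lemma max_prefix (w : pos) : forall (P : pos -> Prop), P [] -> (forall p, P p -> prefix p w) ->
  (forall p p', P p -> prefix p' p -> P p') -> exists p, P p /\ forall p', P p' -> prefix p' p.
Proof.
  induction w as [|a w IH]; intros P H0 Hb Hc.
  - exists []. split; auto.
  - destruct (classic (P [a])) as [Ha|Ha].
    + destruct (IH (fun p => P (a :: p))) as (p & Hp & Hmax).
      * exact Ha.
      * intros p Hp. apply prefix_cons_inv with a. auto.
      * intros p p' Hp Hpp. eapply Hc; [exact Hp|]. destruct Hpp as [r ->]. now exists r.
      * exists (a :: p). split; auto. intros [|b p'] Hp'. { now exists (a :: p). }
        pose proof (Hb _ Hp') as [r E]. injection E as <- _.
        destruct (Hmax p' Hp') as [r' ->]. now exists r'.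
    + exists []. split; auto. intros [|b p'] Hp'. { apply prefix_refl. }
      exfalso. pose proof (Hb _ Hp') as [r E]. injection E as <- _. apply Ha.
      eapply Hc; [exact Hp'|]. now exists p'.
Qed.

Lemma gcp_exists {F V} (K : state F V) : (exists g, K g) -> exists p, is_gcp K p.
Proof.
  intros [g0 Hg0].
  destruct (max_prefix (snd (gann g0)) (fun p => forall g, K g -> prefix p (snd (gann g)))) as (p & Hp & Hm).
  - intros g _. now exists (snd (gann g)).
  - intros p Hp. apply Hp. exact Hg0.
  - intros p p' Hp Hpp g Hg. eapply prefix_trans; eauto.
  - exists p. split; auto.
Qed.

Section Final.
Context {F V : Type} (ar : F -> nat) (R : list (@rule F V)) (L : state F V -> pos).
Hypothesis HR : isTRS ar R.
Hypothesis HL : valid_labelling ar R L.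
Implicit Types (s : state F V) (kids cs : list (@ctree F V)) (a b c ct X Y Z k : @ctree F V) (A anc : list pos) (sq cf : state F V * pos) (t : term F V).

Notation TI := (TI ar R L).

Lemma walk t anc X : TI t anc X -> (forall sq, ~ InBud sq X) ->
  forall s p0 G l q' q sigma r, root_cfg X = (s, p0) -> s G -> gann G = (l, q') -> q = p0 ++ q' ->
  subterm t q = Some (subst sigma l) -> In (l, r) R ->
  exists sq, InNode sq X /\ (matches_L ar R L (fst sq) (snd sq) t ((l, r), q) \/
                             matches_NL ar R L (fst sq) (snd sq) t ((l, r), q)).
Proof.
  induction 1 as [anc s p Hc|anc s p kids f args Hc Hsub Hroots HTk IH Hsubk Heqk Hdisj];
    intros Hnb s1 p1 G l q' q sigma r Hroot HG Hann Hq Hsq Hin.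
  - exfalso. apply (Hnb (s, p)). constructor.
  - simpl in Hroot. injection Hroot as <- <-.
    pose proof Hc as (Hr & _).
    assert (Hdesc : forall G', deriv ar R L s f G' -> gann G' = (l, q') ->
      exists sq, InNode sq (Node s p kids) /\ (matches_L ar R L (fst sq) (snd sq) t ((l, r), q) \/
                             matches_NL ar R L (fst sq) (snd sq) t ((l, r), q))).
    { intros G' HG' Hann'.
      set (K := fun g => deriv ar R L s f g /\
              clos_refl_trans _ (fun x y => deriv ar R L s f x /\ deriv ar R L s f y /\ ddep x y) G' g).
      assert (HK : dep_class (deriv ar R L s f) K).
      { exists G'. split; auto. intros g'. unfold K. tauto. }
      assert (HKG : K G') by (split; auto; apply rt_refl).
      destruct (gcp_exists K (ex_intro _ G' HKG)) as [p' Hg].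
      assert (Hd : delta ar R L s f (lift p' K, p')) by (exists K; simpl; auto).
      assert (Hin' : In (lift p' K, p ++ p') (map root_cfg kids)) by (apply Hroots; eauto).
      apply in_map_iff in Hin' as (k & Hrk & Hk).
      assert (Pq : prefix p' q') by (pose proof (proj1 Hg G' HKG) as X; now rewrite Hann' in X).
      assert (Hnbk : forall sq, ~ InBud sq k) by (intros sq Hb; apply (Hnb sq); econstructor; eauto).
      destruct (IH k Hk Hnbk (lift p' K) (p ++ p') (lift_goal p' G')
                  l (drop_prefix p' q') q sigma r Hrk) as (sq & Hsq1 & Hsq2).
      - exists G'. split; auto.
      - simpl. rewrite Hann'. reflexivity.
      - rewrite Hq, <- app_assoc, <- (drop_prefix_eq _ _ Pq). reflexivity.
      - exact Hsq.
      - exact Hin.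
      - exists sq. split; auto. econstructor; eauto. }
    destruct G as [mo ma]. simpl in Hann. subst ma.
    destruct (proj1 (reachable_good ar R L HR HL _ Hr) _ HG) as (Hinl & _ & Hob). simpl in Hinl, Hob.
    destruct (classic (obl_pos mo (L s))) as [[l' Hl']|Hno].
    + destruct (Hob _ _ Hl') as (d & Hd & Hsd & Hnv).
      destruct l' as [x|g ys]; [exfalso; apply Hnv; now exists x|].
      assert (Hts : subterm t (p ++ L s) = Some (App g (map (subst sigma) ys))).
      { rewrite Hd, app_assoc, <- Hq, (subterm_app_some _ _ _ _ Hsq). apply (subterm_subst sigma _ _ _ Hsd). }
      rewrite Hsub in Hts. injection Hts as <- _.
      destruct (classic (exists e, reduce ar mo f (L s) e)) as [Hne|Hne].
      * apply (Hdesc (Goal (reduce ar mo f (L s)) (l, q'))); [|reflexivity].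
        left. exists mo, (l, q'). split; auto. split; [exists (App f ys); split; auto|]. split; auto.
      * destruct (lhs_props ar R HR _ Hinl) as (Hwf & _ & _).
        assert (Hlen : length ys = ar f) by exact (Hwf _ _ _ Hsd).
        assert (Hmo : mo = (fun e => e = (App f ys, L s))).
        { apply functional_extensionality. intros [l2 r2]. apply propositional_extensionality. split.
          - intros Hm. destruct (list_eq_dec PeanoNat.Nat.eq_dec r2 (L s)) as [->|E].
            + destruct (Hob _ _ Hm) as (d2 & Hd2 & Hsd2 & _). rewrite Hd in Hd2.
              apply app_inv_head in Hd2. subst d2. rewrite Hsd in Hsd2. now injection Hsd2 as <-.
            + exfalso. apply Hne. exists (l2, r2). left. split; auto.
          - intros E. injection E as -> ->. exact Hl'. }
        assert (Hvars : Forall is_var ys).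
        { apply Forall_forall. intros y Hy. apply NNPP. intros Hny.
          apply In_nth_error in Hy as [j Hj]. apply Hne.
          exists (y, L s ++ [S j]). right. exists (App f ys), (S j), y. split; auto. split.
          - split; [lia|]. rewrite <- Hlen. apply nth_error_Some. congruence.
          - split; [simpl; now rewrite Hj|]. split; auto. }
        exists (s, p). split; [constructor|].
        assert (Hout : forall Xk : term F V -> Prop, Xk l -> out_gen ar R L Xk s f ((l, r), q')).
        { intros Xk HXk. split; [exact Hin|]. split; [exact HXk|]. exists ys. split; auto. split; auto.
          rewrite <- Hmo. exact HG. }
        destruct (classic (linear l)) as [Hlin|Hlin].
        -- left. exists f, args, q'. split; [exact Hsub|]. split; [now apply Hout|exact Hq].
        -- right. exists f, args, q'. split; [exact Hsub|]. split; [now apply Hout|exact Hq].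
    + apply (Hdesc (Goal mo (l, q'))); [|reflexivity].
      right. left. split; auto.
Qed.



Record Inv (st : @pstate F V) : Prop := {
  inv_ti : TI (ptm st) [] (pct st);
  inv_root : root_cfg (pct st) = (s0 R, []);
  inv_A : forall it, preds st it \/ pam st it \/ pen st it \/ pdis st it -> In (fst it) R;
  inv_M : forall sq it, InNode sq (pct st) ->
     (matches_L ar R L (fst sq) (snd sq) (ptm st) it \/ matches_NL ar R L (fst sq) (snd sq) (ptm st) it) ->
     preds st it \/ pam st it \/ pen st it \/ pdis st it;
  inv_R : forall it, pam st it \/ pen st it \/ pdis st it ->
     exists sq, InNode sq (pct st) /\ matches_NL ar R L (fst sq) (snd sq) (ptm st) it;
  inv_D : forall l r q, pdis st ((l, r), q) -> exists u, subterm (ptm st) q = Some u /\ ~ consistent l u;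
  inv_wf : wf ar (ptm st) }.

Lemma inv_init t0 : wf ar t0 -> Inv (init_pstate R t0).
Proof.
  intros Hw. constructor; simpl; try (intros; unfold set0 in *; tauto); try exact Hw.
  - constructor. split; [|split; [|split; [|split]]].
    + constructor.
    + intros y z (g & r & [l [_ ->]] & [l' Ho] & ->) [Hz Hne]. simpl in *. injection Ho as _ ->.
      destruct Hz as [x E]. destruct z; [simpl in *; congruence|discriminate].
    + intros y _ [].
    + intros y z [].
    + intros g l q' [l0 [_ ->]] Ha d u _ _. simpl in Ha. injection Ha as -> <-.
      right. exists l, []. split; [reflexivity|]. now exists d.
  - intros sq it H. inversion H.
Qed.


Lemma grow_innode_fwd s p kids a b sq : GrowR s p kids a b -> InNode sq a -> InNode sq b.
Proof.
  intros Hg Hi. destruct (innode_occ L _ _ Hi) as (A & X & Ho & (s1 & p1 & k1 & ->) & <-).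
  destruct (grow_occ L _ _ _ _ _ _ _ Hg Ho) as (X' & Ho' & HgX).
  inversion HgX; subst. apply (occ_innode L A _ _ Ho'). do 3 eexists; reflexivity.
Qed.

Lemma grow_bud_node s p kids a b : GrowR s p kids a b -> InBud (s, p) a -> InNode (s, p) b.
Proof.
  intros Hg Hi. destruct (inbud_occ L _ _ Hi) as (A & s1 & p1 & Ho & E). injection E as <- <-.
  destruct (grow_occ L _ _ _ _ _ _ _ Hg Ho) as (X' & Ho' & HgX).
  inversion HgX; subst; [|congruence].
  apply (occ_innode L A _ _ Ho'). do 3 eexists; reflexivity.
Qed.

Lemma step_inv select st st' : Inv st -> Step ar R L select st st' ->
  Inv st' /\ (ptm st' = ptm st \/ rewrite_step R (ptm st) (ptm st')).
Proof.
  intros HI Hs. destruct Hs as [st s p f args kids ct' Hsel Hbud Hsub Hkids Hgrow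
                               |st rl p u Hsel Ham Hsub Hcons|st rl p u Hsel Ham Hsub Hcons
                               |st l r p c sigma Hsel Hpe Hsta Hsubt].
  - split; [|left; reflexivity]. destruct HI as [Hti Hroot HA HM HR' HD HW]. constructor; simpl.
    + exact (grow_TI ar R L HR HL _ s p kids f args Hsub Hkids _ _ _ Hti Hgrow).
    + rewrite <- (grow_root _ _ _ _ _ Hgrow). exact Hroot.
    + intros it H. unfold setU in H. destruct H as [[H|H]|[[H|H]|H]]; auto.
      * destruct H as (f' & a' & q & _ & (Hin & _) & _). exact Hin.
      * destruct H as (f' & a' & q & _ & (Hin & _) & _). exact Hin.
    + intros sq it Hin Hm. unfold setU.
      destruct (grow_innode_back s p kids sq _ _ Hgrow) as [H| ->]; auto.
      * intros sq' k Hk Hn. apply Hkids in Hk as (s' & p' & _ & ->). inversion Hn.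
      * destruct (HM _ _ H Hm) as [X|[X|X]]; tauto.
      * destruct Hm as [Hm|Hm]; simpl in Hm; tauto.
    + intros it H. unfold setU in H. destruct H as [[H|H]|H].
      * destruct (HR' it (or_introl H)) as (sq & Hi & Hm). exists sq. split; auto. eapply grow_innode_fwd; eauto.
      * exists (s, p). split; auto. eapply grow_bud_node; eauto.
      * destruct (HR' it (or_intror H)) as (sq & Hi & Hm). exists sq. split; auto. eapply grow_innode_fwd; eauto.
    + exact HD.
    + exact HW.
  - split; [|left; reflexivity]. destruct HI as [Hti Hroot HA HM HR' HD HW]. constructor; simpl; auto.
    + intros it H. unfold setU, setD in H. cbv beta in H. apply HA. decompose [or and] H; subst; tauto.
    + intros sq it Hin Hm. unfold setU, setD. destruct (HM _ _ Hin Hm) as [H|[H|[H|H]]]; [tauto| |tauto|tauto].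
      destruct (classic (it = (rl, p))) as [E|E]; [right; right; left; right; exact E|tauto].
    + intros it H. unfold setU, setD in H. cbv beta in H. apply HR'. decompose [or and] H; subst; tauto.
  - split; [|left; reflexivity]. destruct HI as [Hti Hroot HA HM HR' HD HW]. constructor; simpl; auto.
    + intros it H. unfold setU, setD in H. cbv beta in H. apply HA. decompose [or and] H; subst; tauto.
    + intros sq it Hin Hm. unfold setU, setD. destruct (HM _ _ Hin Hm) as [H|[H|[H|H]]]; [tauto| |tauto|tauto].
      destruct (classic (it = (rl, p))) as [E|E]; [right; right; right; right; exact E|tauto].
    + intros it H. unfold setU, setD in H. cbv beta in H. apply HR'. decompose [or and] H; subst; tauto.
    + intros l r q H. unfold setU in H. cbv beta in H. destruct H as [H|E]; [exact (HD _ _ _ H)|].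
      injection E as E1 E2. subst q rl. exists u. split; auto.
  - destruct HI as [Hti Hroot HA HM HR' HD HW].
    assert (Hin : In (l, r) R) by (apply (HA ((l, r), p)); tauto).
    split; [|right; exists l, r, p, sigma; simpl; auto].
    assert (Hv : subterm t p <> None) by (unfold t; rewrite Hsubt; discriminate).
    assert (Kpruned : forall A X it, Occ L A X (pct st) -> is_node X -> (In p A \/ ins L X = p) ->
              matches_NL ar R L (fst (root_cfg X)) (snd (root_cfg X)) t it -> N it).
    { intros A X it Ho Hn Hp Hm. exists (root_cfg X). split; auto.
      exact (key2 ar R L HL t (pct st) p c A X Hti Hsta Ho Hn Hp). }
    assert (Knot : forall A X it Xk, Occ L A X (pct st) -> ~ In p A -> ins L X <> p ->
              matches_gen ar R L Xk (fst (root_cfg X)) (snd (root_cfg X)) t it -> ~ N it /\ ~ ML it).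
    { intros A X it Xk Ho HpA Hne Hm. split; intros HN.
      - destruct (key1 ar R L HR HL t (pct st) p c A X _ Xk it Hti Hsta Ho HN Hm); auto.
      - destruct (key1 ar R L HR HL t (pct st) p c A X _ Xk it Hti Hsta Ho HN Hm); auto. }
    assert (Hsurv : forall it, (pam st it \/ pen st it \/ pdis st it) -> ~ N it ->
              exists A X, Occ L A X (pct st) /\ is_node X /\ ~ In p A /\ ins L X <> p /\
                matches_NL ar R L (fst (root_cfg X)) (snd (root_cfg X)) t it).
    { intros it Hold HnN. destruct (HR' it Hold) as (sq & Hi & Hm).
      destruct (innode_occ L _ _ Hi) as (A & X & Ho & Hn & <-).
      destruct (classic (In p A \/ ins L X = p)) as [Hp|Hp].
      - exfalso. apply HnN. eapply Kpruned; eauto.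
      - exists A, X. split; auto. split; auto. split; [tauto|]. split; [tauto|exact Hm]. }
    constructor; simpl.
    + exact (prune_TI ar R L HL t p (subst sigma r) Hv [] (pct st) Hti (fun H => H)).
    + rewrite prune_root. exact Hroot.
    + intros it H. apply HA. unfold rem, en1, dis1 in H; unfold setU, setD in H. decompose [or and] H; tauto.
    + intros sq it Hin' Hm.
      destruct (remaining L (pct st) p sq Hin') as (A & X & Ho & Hn & <- & HpA & Hne).
      assert (Hm' : matches_L ar R L (fst (root_cfg X)) (snd (root_cfg X)) t it \/
                    matches_NL ar R L (fst (root_cfg X)) (snd (root_cfg X)) t it).
      { destruct Hm as [Hm|Hm]; [left|right];
        exact (proj1 (matches_same ar R L HL t (pct st) p (subst sigma r) A X _ it Hti Ho Hn HpA Hne Hv) Hm). }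
      pose proof (HM _ _ (occ_innode L A X _ Ho Hn) Hm') as Hold.
      assert (HK : ~ N it /\ ~ ML it) by (destruct Hm' as [Hm'|Hm']; eapply Knot; eauto).
      destruct (classic (rem it)) as [Hr|Hr]; unfold en1, dis1; unfold setU, setD; tauto.
    + intros it H.
      assert (Hold : (pam st it \/ pen st it \/ pdis st it) /\ ~ N it)
        by (unfold rem, en1, dis1 in H; unfold setU, setD in H; decompose [or and] H; tauto).
      destruct (Hsurv it (proj1 Hold) (proj2 Hold)) as (A & X & Ho & Hn & HpA & Hne & Hm).
      exists (root_cfg X). split.
      * exact (survive L (pct st) p A X Ho Hn HpA Hne).
      * exact (proj2 (matches_same ar R L HL t (pct st) p (subst sigma r) A X _ it Hti Ho Hn HpA Hne Hv) Hm).
    + intros l' r' q H. unfold setD, dis1 in H. destruct H as [[Hdis HnN] Hnrem].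
      destruct (HD _ _ _ Hdis) as (u & Hu & Hnc).
      destruct (Hsurv _ (or_intror (or_intror Hdis)) HnN) as (A & X & Ho & Hn & HpA & Hne & Hm).
      destruct (rep_nv ar R L HR HL t (pct st) A X _ l' r' q Hti Ho Hm) as [_ NV].
      assert (Hl'R : In (l', r') R) by (apply (HA ((l', r'), q)); tauto).
      destruct HR as [_ HRr]. destruct (HRr _ _ Hl'R) as (Hnvl & _).
      apply (dis_keep t (subst sigma r) p l' u q Hv Hu Hnc Hnvl).
      * intros d v Hd Hnv. exact (not_below_nv ar R L HL t (pct st) A X p (q ++ d) Hti Ho HpA Hne (NV d v Hd Hnv)).
      * intros Hex. apply Hnrem. split.
        -- unfold setU, en1, dis1, setD. right. split; auto.
        -- exact Hex.
    + exact (wf_rewrite ar R t l r p sigma HR Hin HW Hsubt).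
Qed.

End Final.

Section Main.
Context {F V : Type} (ar : F -> nat) (R : list (@rule F V)) (L : state F V -> pos).
Hypothesis HR : isTRS ar R.
Hypothesis HL : valid_labelling ar R L.
Implicit Types (s : state F V) (kids cs : list (@ctree F V)) (a b c ct X Y Z k : @ctree F V) (A anc : list pos) (sq cf : state F V * pos) (t : term F V).

Notation TI := (TI ar R L).

Lemma L_s0 : L (s0 R) = [].
Proof.
  destruct (HL _ (reach0 ar R L)) as (mo & l & Hs & [l' Ho]).
  destruct Hs as [l0 [_ E]]. injection E as -> _. injection Ho as _ E. exact E.
Qed.

Lemma occ_nobud A X ct : Occ L A X ct -> (forall sq, ~ InBud sq ct) -> forall sq, ~ InBud sq X.
Proof.
  induction 1 as [c|A X s p kids k Hk Ho IH]; intros Hn sq Hb; [exact (Hn sq Hb)|].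
  apply (IH (fun sq' Hb' => Hn sq' ltac:(econstructor; eauto)) sq Hb).
Qed.

Lemma TI_kid t anc s p kids k : TI t anc (Node s p kids) -> In k kids -> TI t ((p ++ L s) :: anc) k.
Proof. intros HT Hk. inversion HT; subst. auto. Qed.

Lemma descend t anc s p0 kids f args G :
  TI t anc (Node s p0 kids) -> subterm t (p0 ++ L s) = Some (App f args) -> deriv ar R L s f G ->
  exists k s' p', In k kids /\ root_cfg k = (s', p0 ++ p') /\ s' (lift_goal p' G) /\
    prefix p' (snd (gann G)) /\ (forall l r, gobl G (l, r) -> prefix p' r).
Proof.
  intros HT Ht HG. inversion HT as [|anc' s1 p1 kids1 f0 args0 Hc Hsub Hroots]; subst.
  rewrite Ht in Hsub. injection Hsub as <- <-.
  set (K := fun g => deriv ar R L s f g /\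
          clos_refl_trans _ (fun x y => deriv ar R L s f x /\ deriv ar R L s f y /\ ddep x y) G g).
  assert (HK : dep_class (deriv ar R L s f) K) by (exists G; split; auto; intros g'; unfold K; tauto).
  assert (HKG : K G) by (split; auto; apply rt_refl).
  destruct (gcp_exists K (ex_intro _ G HKG)) as [p' Hg].
  assert (Hd : delta ar R L s f (lift p' K, p')) by (exists K; simpl; auto).
  assert (Hin' : In (lift p' K, p0 ++ p') (map root_cfg kids)) by (apply Hroots; eauto).
  apply in_map_iff in Hin' as (k & Hrk & Hk).
  destruct Hc as (Hr & _).
  assert (HGK : GoodState R K).
  { apply (good_sub R (deriv ar R L s f)); [exact (deriv_good_r ar R L HR HL s f Hr)|]. intros g [Hg' _]. exact Hg'. }
  exists k, (lift p' K), p'. split; auto. split; auto. split; [exists G; split; auto|].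
  split; [exact (proj1 Hg G HKG)|].
  intros l r Ho. exact (gcp_obl R K p' G l r HGK Hg HKG Ho).
Qed.

Lemma walk_deriv t anc s p0 kids f args G l q' q sigma r :
  TI t anc (Node s p0 kids) -> (forall sq, ~ InBud sq (Node s p0 kids)) ->
  subterm t (p0 ++ L s) = Some (App f args) -> deriv ar R L s f G -> gann G = (l, q') -> q = p0 ++ q' ->
  subterm t q = Some (subst sigma l) -> In (l, r) R ->
  exists sq, InNode sq (Node s p0 kids) /\ (matches_L ar R L (fst sq) (snd sq) t ((l, r), q) \/
                             matches_NL ar R L (fst sq) (snd sq) t ((l, r), q)).
Proof.
  intros HT Hnb Ht HG Ha Hq Hs Hin.
  destruct (descend t anc s p0 kids f args G HT Ht HG) as (k & s' & p' & Hk & Hrk & Hs' & Pq & _).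
  rewrite Ha in Pq. simpl in Pq.
  inversion HT as [|anc' s1 p1 kids1 f0 args0 Hc Hsub Hroots HTk]; subst.
  assert (Hnbk : forall sq, ~ InBud sq k) by (intros sq Hb; apply (Hnb sq); econstructor; eauto).
  destruct (walk ar R L HR HL t _ k (HTk k Hk) Hnbk s' (p0 ++ p') (lift_goal p' G) l (drop_prefix p' q') (p0 ++ q')
              sigma r Hrk Hs') as (sq & W1 & W2).
  - simpl. rewrite Ha. reflexivity.
  - rewrite <- app_assoc, <- (drop_prefix_eq _ _ Pq). reflexivity.
  - exact Hs.
  - exact Hin.
  - exists sq. split; auto. econstructor; eauto.
Qed.

Lemma follow t anc X : TI t anc X -> (forall sq, ~ InBud sq X) ->
  forall s p0 G y, root_cfg X = (s, p0) -> s G -> (exists e, gobl G e) ->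
  (forall l r, gobl G (l, r) -> p0 ++ r = y) ->
  exists A Z, Occ L A Z X /\ is_node Z /\ ins L Z = y.
Proof.
  induction 1 as [anc s p Hc|anc s p kids f args Hc Hsub Hroots HTk IH Hsubk Heqk Hdisj];
    intros Hnb s1 p1 G y Hroot HG Hne Hob.
  - exfalso. apply (Hnb (s, p)). constructor.
  - simpl in Hroot. injection Hroot as <- <-.
    destruct (list_eq_dec PeanoNat.Nat.eq_dec (p ++ L s) y) as [E|E].
    + exists [], (Node s p kids). split; [constructor|]. split; [do 3 eexists; reflexivity|exact E].
    + assert (HD : deriv ar R L s f G).
      { right. left. split; auto. intros [l Hl]. apply E. exact (Hob _ _ Hl). }
      destruct (descend t anc s p kids f args G
                  (ti_node ar R L t anc s p kids f args Hc Hsub Hroots HTk Hsubk Heqk Hdisj) Hsub HD)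
        as (k & s' & p' & Hk & Hrk & Hs' & _ & Hpo).
      assert (Hnbk : forall sq, ~ InBud sq k) by (intros sq Hb; apply (Hnb sq); econstructor; eauto).
      destruct (IH k Hk Hnbk s' (p ++ p') (lift_goal p' G) y Hrk Hs') as (A & Z & Ho & Hn & Hi).
      * destruct Hne as [[l r] He]. exists (l, drop_prefix p' r). simpl. exists l, r. auto.
      * intros l r (l1 & r1 & Ho & E1). injection E1 as -> ->.
        rewrite <- app_assoc, <- (drop_prefix_eq _ _ (Hpo _ _ Ho)). exact (Hob _ _ Ho).
      * exists (A ++ [p ++ L s]), Z. split; [econstructor; eauto|]. auto.
Qed.

Lemma insp t ct : TI t [] ct -> root_cfg ct = (s0 R, []) -> (forall sq, ~ InBud sq ct) -> wf ar t ->
  forall y f args, subterm t y = Some (App f args) ->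
  exists A Z, Occ L A Z ct /\ is_node Z /\ ins L Z = y.
Proof.
  intros HT Hroot Hnb Hw y. induction y as [|i y IH] using rev_ind; intros f args Hy.
  - exists [], ct. split; [constructor|]. destruct ct as [s p|s p kids].
    + exfalso. apply (Hnb (s, p)). constructor.
    + simpl in Hroot. injection Hroot as -> ->. split; [do 3 eexists; reflexivity|].
      unfold ins, insc. simpl. exact L_s0.
  - rewrite subterm_app in Hy. destruct (subterm t y) as [v|] eqn:Ev; [|discriminate].
    destruct v as [x|g gargs]; [discriminate|]. simpl in Hy.
    destruct i as [|j]; [discriminate|]. destruct (nth_error gargs j) as [a|] eqn:Ea; [|discriminate].
    destruct (IH g gargs eq_refl) as (A & Z & HoZ & (s & p0 & kids & ->) & HiZ).
    unfold ins, insc in HiZ. simpl in HiZ.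
    pose proof (TI_occ ar R L t [] ct A _ HT HoZ) as HTZ. rewrite app_nil_r in HTZ.
    assert (HnbZ := occ_nobud _ _ _ HoZ Hnb).
    assert (Hex : exists l1 r1, In (l1, r1) R).
    { destruct HR as [HRne _]. destruct R as [|[l1 r1] R']; [congruence|]. exists l1, r1. now left. }
    destruct Hex as (l1 & r1 & Hlr).
    assert (Hl1 : In l1 (lhs R)) by (unfold lhs; apply (in_map fst R (l1, r1)); exact Hlr).
    set (G3 := Goal (fun e => e = (l1, L s ++ [S j])) (l1, L s ++ [S j]) : goal F V).
    assert (HG3 : deriv ar R L s g G3).
    { right. right. exists l1, (S j). split; auto. split; auto. split; [lia|].
      rewrite <- (Hw _ _ _ Ev). apply nth_error_Some. congruence. }
    assert (Hsub : subterm t (p0 ++ L s) = Some (App g gargs)) by (rewrite HiZ; exact Ev).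
    destruct (descend t A s p0 kids g gargs G3 HTZ Hsub HG3) as (k & s' & p' & Hk & Hrk & Hs' & _ & Hpo).
    assert (Hnbk : forall sq, ~ InBud sq k) by (intros sq Hb; apply (HnbZ sq); econstructor; eauto).
    destruct (follow t _ k (TI_kid _ _ _ _ _ _ HTZ Hk) Hnbk s' (p0 ++ p') (lift_goal p' G3) (y ++ [S j]) Hrk Hs')
      as (A2 & Z2 & Ho2 & Hn2 & Hi2).
    + exists (l1, drop_prefix p' (L s ++ [S j])). simpl. exists l1, (L s ++ [S j]). auto.
    + intros l r (l2 & r2 & Ho & E1). injection E1 as -> ->.
      rewrite <- app_assoc, <- (drop_prefix_eq _ _ (Hpo _ _ Ho)). simpl in Ho. injection Ho as -> ->.
      rewrite app_assoc, HiZ. reflexivity.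
    + exists (A2 ++ [p0 ++ L s] ++ A), Z2. split; auto.
      rewrite app_assoc. eapply occ_trans; [exact HoZ|]. econstructor; eauto.
Qed.

End Main.

Lemma innode_sub {F V} (L : state F V -> pos) A Z ct sq : Occ L A Z ct -> InNode sq Z -> InNode sq ct.
Proof.
  intros Ho Hi. destruct (innode_occ L _ _ Hi) as (A2 & X & Ho2 & Hn & <-).
  exact (occ_innode L _ _ _ (occ_trans L _ _ _ _ _ Ho Ho2) Hn).
Qed.

Theorem corollary2 (F V : Type) (ar : F -> nat) (HF : finite_type F)
  (R : list (@rule F V)) (HR : isTRS ar R)
  (L : state F V -> pos) (HL : valid_labelling ar R L)
  (t0 : term F V) (Ht0g : ground t0) (Ht0w : wf ar t0)
  (select : @pstate F V -> @item F V) (Hsel : strategy select)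
  (t : term F V) :
  normalize_returns ar R L select t0 t ->
  rewrites R t0 t /\ normal_form R t.
Proof.
  intros (st & Hrt & Hfin & <-).
  assert (Hrun : forall st1 st2, clos_refl_trans _ (Step ar R L select) st1 st2 ->
             Inv ar R L st1 -> Inv ar R L st2 /\ rewrites R (ptm st1) (ptm st2)).
  { induction 1 as [x y Hs|x|x y z _ IH1 _ IH2]; intros HI.
    - destruct (step_inv ar R L HR HL select x y HI Hs) as [HI' [E|E]]; split; auto.
      + rewrite E. apply rt_refl.
      + apply rt_step. exact E.
    - split; auto. apply rt_refl.
    - destruct (IH1 HI) as [HI1 R1]. destruct (IH2 HI1) as [HI2 R2]. split; auto. eapply rt_trans; eauto. }
  destruct (Hrun _ _ Hrt (inv_init ar R L t0 Ht0w)) as [HI Hrw].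
  split; [exact Hrw|].
  intros l r q sigma Hin Hsq.
  destruct HI as [Hti Hroot HA HM HR' HD HW].
  destruct Hfin as (Hnb & Hnp & Hne & Hna).
  assert (Hl : In l (lhs R)) by (unfold lhs; apply (in_map fst R (l, r)); exact Hin).
  assert (Hfound : exists sq, InNode sq (pct st) /\
            (matches_L ar R L (fst sq) (snd sq) (ptm st) ((l, r), q) \/
             matches_NL ar R L (fst sq) (snd sq) (ptm st) ((l, r), q))).
  { destruct q as [|i y] using rev_ind.
    - destruct (pct st) as [s p|s p kids] eqn:Ect.
      + exfalso. apply (Hnb (s, p)). constructor.
      + simpl in Hroot. injection Hroot as -> ->.
        apply (walk ar R L HR HL (ptm st) [] (Node (s0 R) [] kids) Hti Hnb (s0 R) []
                 (Goal (fun e => e = (l, [])) (l, [])) l [] [] sigma r eq_refl); auto.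
        exists l. split; auto.
    - clear IHy. pose proof Hsq as Hsq'. rewrite subterm_app in Hsq'.
      destruct (subterm (ptm st) y) as [v|] eqn:Ev; [|discriminate].
      destruct v as [x|g gargs]; [discriminate|]. simpl in Hsq'.
      destruct i as [|j]; [discriminate|]. destruct (nth_error gargs j) as [a|] eqn:Ea; [|discriminate].
      destruct (insp ar R L HR HL (ptm st) (pct st) Hti Hroot Hnb HW y g gargs Ev)
        as (A & Z & HoZ & (s & p0 & kids & ->) & HiZ).
      unfold ins, insc in HiZ. simpl in HiZ.
      pose proof (TI_occ ar R L _ [] _ A _ Hti HoZ) as HTZ. rewrite app_nil_r in HTZ.
      assert (HnbZ := occ_nobud L _ _ _ HoZ Hnb).
      assert (Hsub : subterm (ptm st) (p0 ++ L s) = Some (App g gargs)) by (rewrite HiZ; exact Ev).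
      assert (HG3 : deriv ar R L s g (Goal (fun e => e = (l, L s ++ [S j])) (l, L s ++ [S j]))).
      { right. right. exists l, (S j). split; auto. split; [split; [lia|]|reflexivity].
        rewrite <- (HW _ _ _ Ev). apply nth_error_Some. congruence. }
      destruct (walk_deriv ar R L HR HL (ptm st) A s p0 kids g gargs _ l (L s ++ [S j]) (y ++ [S j]) sigma r
                  HTZ HnbZ Hsub HG3 eq_refl) as (sq & Hi & Hm); auto.
      + rewrite app_assoc, HiZ. reflexivity.
      + exists sq. split; auto. eapply innode_sub; eauto. }
  destruct Hfound as (sq & Hi & Hm).
  destruct (HM _ _ Hi Hm) as [H|[H|[H|H]]].
  - exact (Hnp _ H).
  - exact (Hna _ H).
  - exact (Hne _ H).
  - destruct (HD _ _ _ H) as (u & Hu & Hnc). rewrite Hsq in Hu. injection Hu as <-.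
    apply Hnc. apply consistent_subst.
Qed.
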